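(* Assume (C1) and (C2). Then $$\inf_{u\in\mathcal{N}}I(u)=:c_*=\inf_{u\in\mathcal{D},\,u\neq0}\ \max_{t\ge0}I(tu)$$ and $$\inf_{u\in\mathcal{M}}I(u)=:m_*=\inf_{u\in\mathcal{D},\,u^+\neq0,\,u^-\neq0}\ \max_{s,t\ge0}I(su^++tu^-).$$
   Context: Fix real numbers $p,q,r$ with $1<p<q$, $\frac p2$ a positive integer, and $r\ge1$, and functions $a,b,c:\mathbb{Z}\to(0,+\infty)$. Conditions: - (C1) There is $b_0>0$ with $b(n)\ge b_0$ for all $n$ and $b(n)\to+\infty$ as $|n|\to\infty$. - (C2) There is $c_0>0$ with $c(n)\le c_0$ for all $n$ and $\sum_n c(n)<+\infty$. Notation for a real sequence $u=(u(n))_{n\in\mathbb{Z}}$: $\Delta u(n)=u(n+1)-u(n)$, $u^+(n)=\max\{u(n),0\}$, $u^-(n)=\min\{u(n),0\}$. Spaces: - $E$ is the set of real sequences $u$ with $\|u\|:=\big(\sum_n[a(n)|\Delta u(n)|^p+b(n)|u(n)|^p]\big)^{1/p}<\infty$. - $\mathcal{D}=\{u\in E:\sum_n c(n)|u(n)|^q\ln|u(n)|^r<+\infty\}$, where terms with $u(n)=0$ are read as $0$. For $u,v\in\mathcal{D}$: - $I(u)=\frac1p\|u\|^p+\frac{r}{q^2}\sum_n c(n)|u(n)|^q-\frac1q\sum_n c(n)|u(n)|^q\ln|u(n)|^r$. - $\langle I'(u),v\rangle=\sum_n[a(n)|\Delta u(n)|^{p-2}\Delta u(n)\Delta v(n)+b(n)|u(n)|^{p-2}u(n)v(n)]-\sum_n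 c(n)|u(n)|^{q-2}u(n)v(n)\ln|u(n)|^r$. Sets: - $\mathcal{N}=\{u\in\mathcal{D}:u\ne0,\ \langle I'(u),u\rangle=0\}$. - $\mathcal{M}=\{u\in\mathcal{D}:u^+\ne0,\ u^-\neq0,\ \langle I'(u),u^+\rangle=0,\ \langle I'(u),u^-\rangle=0\}$. *)

(* Defs.v *)
From Stdlib Require Import Reals ZArith.
From Coquelicot Require Import Coquelicot.
Open Scope R_scope.

Definition seqZ := Z -> R.

Definition summableZ (f : seqZ) : Prop :=
  ex_series (fun k : nat => Rabs (f (Z.of_nat k))) /\
  ex_series (fun k : nat => Rabs (f (- Z.of_nat (S k))%Z)).

Definition sumZ (f : seqZ) : R :=
  Series (fun k : nat => f (Z.of_nat k)) + Series (fun k : nat => f (- Z.of_nat (S k))%Z).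

Definition rpow (x a : R) : R := if Rlt_dec 0 x then Rpower x a else 0.

Definition Delta (u : seqZ) : seqZ := fun n => u (n + 1)%Z - u n.
Definition upos (u : seqZ) : seqZ := fun n => Rmax (u n) 0.
Definition uneg (u : seqZ) : seqZ := fun n => Rmin (u n) 0.
Definition zeroZ : seqZ := fun _ => 0.
Definition scalZ (t : R) (u : seqZ) : seqZ := fun n => t * u n.
Definition addZ (u v : seqZ) : seqZ := fun n => u n + v n.

Section Functional.
Variables (p q r : R) (a b c : Z -> R).

Definition Eterm (u : seqZ) : seqZ :=
  fun n => a n * rpow (Rabs (Delta u n)) p + b n * rpow (Rabs (u n)) p.

Definition inE (u : seqZ) : Prop := summableZ (Eterm u).

Definition normE (u : seqZ) : R := rpow (sumZ (Eterm u)) (1 / p).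

Definition Lterm (u : seqZ) : seqZ :=
  fun n => if Req_EM_T (u n) 0 then 0
           else c n * rpow (Rabs (u n)) q * ln (rpow (Rabs (u n)) r).

Definition inD (u : seqZ) : Prop := inE u /\ summableZ (Lterm u).

Definition Ifun (u : seqZ) : R :=
  1 / p * rpow (normE u) p
  + r / (q ^ 2) * sumZ (fun n => c n * rpow (Rabs (u n)) q)
  - 1 / q * sumZ (Lterm u).

Definition dI (u v : seqZ) : R :=
  sumZ (fun n => a n * rpow (Rabs (Delta u n)) (p - 2) * Delta u n * Delta v n
               + b n * rpow (Rabs (u n)) (p - 2) * u n * v n)
  - sumZ (fun n => if Req_EM_T (u n) 0 then 0
                   else c n * rpow (Rabs (u n)) (q - 2) * u n * v n
                        * ln (rpow (Rabs (u n)) r)).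

Definition inN (u : seqZ) : Prop := inD u /\ u <> zeroZ /\ dI u u = 0.

Definition inM (u : seqZ) : Prop :=
  inD u /\ upos u <> zeroZ /\ uneg u <> zeroZ /\
  dI u (upos u) = 0 /\ dI u (uneg u) = 0.

Definition maxRay (u : seqZ) : Rbar :=
  Lub_Rbar (fun y => exists t, 0 <= t /\ y = Ifun (scalZ t u)).

Definition maxQuad (u : seqZ) : Rbar :=
  Lub_Rbar (fun y => exists s t, 0 <= s /\ 0 <= t /\
                       y = Ifun (addZ (scalZ s (upos u)) (scalZ t (uneg u)))).
End Functional.

(* Main.v *)
Require Import Defs.
From Stdlib Require Import Reals ZArith.
From Coquelicot Require Import Coquelicot.
From Stdlib Require Import Lra Lia Psatz FunctionalExtensionality Classical ClassicalEpsilon.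
Open Scope R_scope.
Notation Delta := Defs.Delta.

Lemma es_cmp (a b : nat -> R) : (forall n, Rabs (a n) <= b n) -> ex_series b ->
  ex_series (fun n => Rabs (a n)).
Proof. intros H Hb. apply (@ex_series_le R_AbsRing R_CompleteNormedModule (fun n => Rabs (a n)) b); auto.
  intros n. change (norm (Rabs (a n))) with (Rabs (Rabs (a n))). rewrite Rabs_Rabsolu. apply H. Qed.

Lemma sZ_cmp (f g : seqZ) : (forall n, Rabs (g n) <= f n) -> summableZ f -> summableZ g.
Proof. intros H [H1 H2]. split.
  - apply (es_cmp _ (fun k => Rabs (f (Z.of_nat k)))); auto.
    intros n; eapply Rle_trans; [apply H| apply Rle_abs].
  - apply (es_cmp _ (fun k => Rabs (f (- Z.of_nat (S k))%Z))); auto.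
    intros n; eapply Rle_trans; [apply H| apply Rle_abs]. Qed.

Lemma sZ_plus f g : summableZ f -> summableZ g -> summableZ (fun n => f n + g n).
Proof. intros [F1 F2] [G1 G2]. split.
  - apply (es_cmp _ (fun k => Rabs (f (Z.of_nat k)) + Rabs (g (Z.of_nat k)))).
    intros; apply Rabs_triang. apply (ex_series_plus _ _ F1 G1).
  - apply (es_cmp _ (fun k => Rabs (f (- Z.of_nat (S k))%Z) + Rabs (g (- Z.of_nat (S k))%Z))).
    intros; apply Rabs_triang. apply (ex_series_plus _ _ F2 G2). Qed.

Lemma sZ_scal k f : summableZ f -> summableZ (fun n => k * f n).
Proof. intros [F1 F2]. split.
  - apply (es_cmp _ (fun n => Rabs k * Rabs (f (Z.of_nat n)))).
    intros; rewrite Rabs_mult; lra. apply (ex_series_scal_l (Rabs k) _ F1).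
  - apply (es_cmp _ (fun n => Rabs k * Rabs (f (- Z.of_nat (S n))%Z))).
    intros; rewrite Rabs_mult; lra. apply (ex_series_scal_l (Rabs k) _ F2). Qed.

Lemma sZ_abs f : summableZ f -> summableZ (fun n => Rabs (f n)).
Proof. intros [F1 F2]. split.
  - eapply ex_series_ext; [|exact F1]. intros; simpl; rewrite Rabs_Rabsolu; auto.
  - eapply ex_series_ext; [|exact F2]. intros; simpl; rewrite Rabs_Rabsolu; auto. Qed.

Lemma sZ_ext f g : (forall n, f n = g n) -> summableZ f -> summableZ g.
Proof. intros H F. apply (sZ_cmp (fun n => Rabs (f n))). intros n; rewrite <- H; apply Rle_refl.
  apply sZ_abs; auto. Qed.

Lemma sumZ_ext f g : (forall n, f n = g n) -> sumZ f = sumZ g.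
Proof. intros H. unfold sumZ. rewrite (Series_ext _ _ (fun n => H _)).
  rewrite (Series_ext (fun k => f _) _ (fun n => H _)). reflexivity. Qed.

Lemma sumZ_plus f g : summableZ f -> summableZ g -> sumZ (fun n => f n + g n) = sumZ f + sumZ g.
Proof. intros [F1 F2] [G1 G2]. unfold sumZ.
  rewrite (Series_plus _ _ (ex_series_Rabs _ F1) (ex_series_Rabs _ G1)).
  rewrite (Series_plus _ _ (ex_series_Rabs _ F2) (ex_series_Rabs _ G2)). ring. Qed.

Lemma sumZ_scal k f : sumZ (fun n => k * f n) = k * sumZ f.
Proof. unfold sumZ. rewrite !Series_scal_l. ring. Qed.

Lemma sumZ_minus f g : summableZ f -> summableZ g -> sumZ (fun n => f n - g n) = sumZ f - sumZ g.
Proof. intros F G. rewrite (sumZ_ext _ (fun n => f n + (-1) * g n)) by (intros; ring).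
  rewrite sumZ_plus; auto. rewrite sumZ_scal; ring. apply sZ_scal; auto. Qed.

Lemma Series_nonneg (a : nat -> R) : (forall n, 0 <= a n) -> ex_series a -> 0 <= Series a.
Proof. intros H E. replace 0 with (Series (fun _ => 0)).
  apply Series_le; auto. intros; split; [lra| auto].
  rewrite (Series_ext _ (fun n => 0 * a n)) by (intros; ring).
  rewrite Series_scal_l; ring. Qed.

Lemma sumZ_nonneg f : (forall n, 0 <= f n) -> summableZ f -> 0 <= sumZ f.
Proof. intros H [F1 F2]. unfold sumZ.
  pose proof (Series_nonneg _ (fun n => H _) (ex_series_Rabs _ F1)).
  pose proof (Series_nonneg _ (fun n => H _) (ex_series_Rabs _ F2)). lra. Qed.

Lemma sumZ_le f g : (forall n, f n <= g n) -> summableZ f -> summableZ g -> sumZ f <= sumZ g.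
Proof. intros H F G. assert (0 <= sumZ (fun n => g n - f n)).
  apply sumZ_nonneg. intros n; specialize (H n); lra. apply sZ_plus; auto.
  apply sZ_scal with (k := -1) in F. eapply sZ_ext; [|exact F]. intros; simpl; ring.
  rewrite sumZ_minus in H0; auto. lra. Qed.

Lemma sum_f_R0_ge (a : nat -> R) m : (forall n, 0 <= a n) -> a m <= sum_f_R0 a m.
Proof. intros H. destruct m. simpl; lra. simpl.
  assert (0 <= sum_f_R0 a m). { induction m. simpl; auto. simpl. specialize (H (S m)); lra. }
  lra. Qed.

Lemma Series_ge_term (a : nat -> R) m : (forall n, 0 <= a n) -> ex_series a -> a m <= Series a.
Proof. intros H E. rewrite (Series_incr_n a (S m)); [|lia|auto]. simpl pred.
  pose proof (sum_f_R0_ge a m H).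
  assert (0 <= Series (fun k => a (S m + k)%nat)). apply Series_nonneg. intros; auto.
  apply (ex_series_incr_n a (S m)) in E. auto. lra. Qed.

Lemma sumZ_ge_term f m : (forall n, 0 <= f n) -> summableZ f -> f m <= sumZ f.
Proof. intros H [F1 F2]. unfold sumZ.
  pose proof (Series_nonneg _ (fun n => H _) (ex_series_Rabs _ F1)).
  pose proof (Series_nonneg _ (fun n => H _) (ex_series_Rabs _ F2)).
  destruct (Z_le_gt_dec 0 m).
  - pose proof (Series_ge_term (fun k => f (Z.of_nat k)) (Z.to_nat m) (fun n => H _) (ex_series_Rabs _ F1)).
    cbv beta in H2. rewrite Z2Nat.id in H2 by lia. lra.
  - pose proof (Series_ge_term (fun k => f (- Z.of_nat (S k))%Z) (Z.to_nat (- m - 1)) (fun n => H _) (ex_series_Rabs _ F2)).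
    cbv beta in H2. replace (- Z.of_nat (S (Z.to_nat (- m - 1))))%Z with m in H2 by lia. lra. Qed.

Lemma jensen m s t x y : 0 <= s -> 0 <= t -> 0 <= x -> 0 <= y ->
  (s*x+t*y)^(S m) <= (x+y)^m * (s^(S m)*x + t^(S m)*y).
Proof. intros Hs Ht Hx Hy. induction m.
  - simpl; lra.
  - change ((s*x+t*y)^(S (S m))) with ((s*x+t*y) * (s*x+t*y)^(S m)).
    assert (H0: 0 <= s*x+t*y) by nra.
    apply Rle_trans with ((s*x+t*y) * ((x+y)^m * (s^(S m)*x + t^(S m)*y))).
    apply Rmult_le_compat_l; auto.
    assert (Hd: 0 <= (s - t) * (s^(S m) - t^(S m))).
    { destruct (Rle_dec s t).
      - assert (s^(S m) <= t^(S m)) by (apply pow_incr; lra). nra.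
      - assert (t^(S m) <= s^(S m)) by (apply pow_incr; lra). nra. }
    assert (Hp: 0 <= (x+y)^m) by (apply pow_le; lra).
    assert (Hxy: 0 <= x*y) by nra.
    assert (E: (x+y)^(S m) * (s^(S (S m))*x + t^(S (S m))*y) - (s*x+t*y) * ((x+y)^m * (s^(S m)*x + t^(S m)*y))
      = (x+y)^m * (x*y*((s - t) * (s^(S m) - t^(S m))))) by (simpl; ring).
    assert (0 <= (x+y)^m * (x*y*((s - t) * (s^(S m) - t^(S m))))).
    { apply Rmult_le_pos; auto. apply Rmult_le_pos; auto. }
    lra.
Qed.

Lemma conv m x y : 0 <= x -> 0 <= y -> x^(S m) + INR (S m) * x^m * (y - x) <= y^(S m).
Proof. intros Hx Hy. induction m.
  - simpl; lra.
  - assert (E: y^(S (S m)) - (x^(S (S m)) + INR (S (S m)) * x^(S m) * (y - x))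
       = y * (y^(S m) - (x^(S m) + INR (S m) * x^m * (y - x))) + INR (S m) * x^m * ((y-x)*(y-x))).
    { rewrite (S_INR (S m)). cbn [pow]. ring. }
    assert (0 <= y * (y^(S m) - (x^(S m) + INR (S m) * x^m * (y - x)))) by (apply Rmult_le_pos; lra).
    assert (0 <= INR (S m) * x^m * ((y-x)*(y-x))).
    { apply Rmult_le_pos. apply Rmult_le_pos. apply pos_INR. apply pow_le; lra. apply (Rle_0_sqr (y-x)). }
    lra.
Qed.

Lemma lip m x y M : 0 <= x <= M -> 0 <= y <= M ->
  Rabs (x^(S m) - y^(S m)) <= INR (S m) * M^m * Rabs (x - y).
Proof. intros Hx Hy. induction m.
  - simpl. replace (x*1 - y*1) with (x - y) by ring. lra.
  - replace (x^(S (S m)) - y^(S (S m))) with (x * (x^(S m) - y^(S m)) + y^(S m) * (x - y)) by (simpl; ring).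
    eapply Rle_trans. apply Rabs_triang. rewrite !Rabs_mult.
    assert (Hym: y^(S m) <= M^(S m)) by (apply pow_incr; lra).
    assert (0 <= y^(S m)) by (apply pow_le; lra).
    rewrite (Rabs_right x) by lra. rewrite (Rabs_right (y^(S m))) by lra.
    assert (0 <= Rabs (x - y)) by apply Rabs_pos.
    assert (0 <= M^m) by (apply pow_le; lra).
    assert (x * Rabs (x^(S m) - y^(S m)) <= M * (INR (S m) * M ^ m * Rabs (x - y))).
    { apply Rmult_le_compat; try lra. apply Rabs_pos. }
    rewrite (S_INR (S m)). cbn [pow] in *. nra.
Qed.

Definition ss (X Y : R) := (0 <= X /\ 0 <= Y) \/ (X <= 0 /\ Y <= 0).

Section Signed.
Variable j : nat.
Definition NE := S (S (2*j)).
Definition MO := S (2*j).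

Lemma pe z : (-z)^NE = z^NE.
Proof. replace (-z) with (-1 * z) by ring. rewrite Rpow_mult_distr.
  unfold NE. replace (S (S (2*j))) with (2 * S j)%nat by lia. rewrite pow_1_even. ring. Qed.
Lemma po z : (-z)^MO = - z^MO.
Proof. replace (-z) with (-1 * z) by ring. rewrite Rpow_mult_distr.
  unfold MO. rewrite pow_1_odd. ring. Qed.
Lemma NE_S : NE = S MO. Proof. reflexivity. Qed.
Lemma pe_nonneg z : 0 <= z^NE.
Proof. destruct (Rle_dec 0 z). apply pow_le; auto. rewrite <- pe. apply pow_le; lra. Qed.

Lemma key_nn m x y s t Ks Kt : 0 <= x -> 0 <= y -> 0 <= s -> 0 <= t ->
  Ks <= (1 - s^(S m)) / INR (S m) -> Kt <= (1 - t^(S m)) / INR (S m) ->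
  0 <= ((x+y)^(S m) - (s*x+t*y)^(S m)) / INR (S m) - Ks * ((x+y)^m * x) - Kt * ((x+y)^m * y).
Proof. intros Hx Hy Hs Ht HKs HKt.
  pose proof (jensen m s t x y Hs Ht Hx Hy) as J.
  assert (HP: 0 < INR (S m)) by (apply lt_0_INR; lia).
  assert (HZ: 0 <= (x+y)^m) by (apply pow_le; lra).
  assert (E: ((x+y)^(S m) - (x+y)^m * (s^(S m)*x + t^(S m)*y)) / INR (S m) - Ks * ((x+y)^m * x) - Kt * ((x+y)^m * y)
     = (x+y)^m * x * ((1 - s^(S m)) / INR (S m) - Ks) + (x+y)^m * y * ((1 - t^(S m)) / INR (S m) - Kt)).
  { cbn [pow]. field. lra. }
  assert (0 <= (x+y)^m * x * ((1 - s^(S m)) / INR (S m) - Ks)).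
  { apply Rmult_le_pos. apply Rmult_le_pos; lra. lra. }
  assert (0 <= (x+y)^m * y * ((1 - t^(S m)) / INR (S m) - Kt)).
  { apply Rmult_le_pos. apply Rmult_le_pos; lra. lra. }
  assert (((x+y)^m * (s^(S m)*x + t^(S m)*y) - (s*x+t*y)^(S m)) / INR (S m) >= 0).
  { apply Rle_ge. apply Rdiv_le_0_compat; lra. }
  unfold Rdiv in *. lra.
Qed.

Lemma subgrad_nn m x y s t sg : 0 <= x -> 0 <= y -> 0 <= s -> 0 <= t -> 0 <= sg ->
  (sg - 1) * ((s*x+t*y)^m * (s*x)) <= ((sg*s*x+t*y)^(S m) - (s*x+t*y)^(S m)) / INR (S m).
Proof. intros. assert (HP: 0 < INR (S m)) by (apply lt_0_INR; lia).
  pose proof (conv m (s*x+t*y) (sg*s*x+t*y)) as C.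
  assert (0 <= s*x+t*y) by nra. assert (0 <= sg*s*x+t*y).
  { assert (0 <= sg*s) by nra. nra. }
  specialize (C H4 H5).
  apply (Rmult_le_reg_r (INR (S m))); auto.
  replace (((sg*s*x+t*y)^(S m) - (s*x+t*y)^(S m)) / INR (S m) * INR (S m)) with ((sg*s*x+t*y)^(S m) - (s*x+t*y)^(S m)) by (field; lra).
  replace (sg*s*x+t*y - (s*x+t*y)) with ((sg-1)*(s*x)) in C by ring. nra.
Qed.

Lemma upper_nn m x y s t : 0 <= x -> 0 <= y -> 0 <= s -> 0 <= t ->
  (s*x+t*y)^(S m) <= (Rmax s t)^(S m) * (x+y)^(S m).
Proof. intros. rewrite <- Rpow_mult_distr. apply pow_incr. split. nra.
  pose proof (Rmax_l s t). pose proof (Rmax_r s t). nra. Qed.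

Lemma lip_nn m x y s s' t R : 0 <= x -> 0 <= y -> 0 <= s <= R -> 0 <= s' <= R -> 0 <= t <= R ->
  Rabs ((s*x+t*y)^(S m) - (s'*x+t*y)^(S m)) <= INR (S m) * R^m * Rabs (s - s') * (x+y)^(S m).
Proof. intros. eapply Rle_trans. apply (lip m _ _ (R*(x+y))); split; nra.
  rewrite Rpow_mult_distr. replace (s*x+t*y - (s'*x+t*y)) with ((s-s')*x) by ring.
  rewrite Rabs_mult, (Rabs_right x) by lra. cbn [pow].
  assert (0 <= INR (S m)) by apply pos_INR. assert (0 <= R^m) by (apply pow_le; lra).
  assert (0 <= (x+y)^m) by (apply pow_le; lra). pose proof (Rabs_pos (s-s')).
  assert (0 <= INR (S m) * (R^m * (x+y)^m) * Rabs (s-s')) by (repeat apply Rmult_le_pos; auto).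
  assert (INR (S m) * (R ^ m * (x + y) ^ m) * (Rabs (s - s') * x) <= INR (S m) * (R ^ m * (x + y) ^ m) * (Rabs (s - s') * (x+y))).
  { rewrite <- !(Rmult_assoc (INR (S m) * (R ^ m * (x + y) ^ m))). apply Rmult_le_compat_l; auto. lra. }
  eapply Rle_trans; [exact H9|]. right; ring.
Qed.

Ltac negcase X Y x y :=
  let Ex := fresh in let Ey := fresh in
  assert (Ex : X = - x) by (unfold x; ring); assert (Ey : Y = - y) by (unfold y; ring);
  rewrite Ex, Ey.

Lemma key_pt X Y s t Ks Kt : ss X Y -> 0 <= s -> 0 <= t ->
  Ks <= (1 - s^NE) / INR NE -> Kt <= (1 - t^NE) / INR NE ->
  0 <= ((X+Y)^NE - (s*X+t*Y)^NE) / INR NE - Ks * ((X+Y)^MO * X) - Kt * ((X+Y)^MO * Y).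
Proof. intros [[HX HY]|[HX HY]] Hs Ht H1 H2.
  - apply (key_nn MO); auto.
  - set (x := -X). set (y := -Y). pose proof (key_nn MO x y s t Ks Kt) as K.
    change (S MO) with NE in K. negcase X Y x y.
    replace (-x + -y) with (-(x+y)) by ring. replace (s * -x + t * -y) with (-(s*x+t*y)) by ring.
    rewrite !pe, !po. assert (0 <= x) by (unfold x; lra). assert (0 <= y) by (unfold y; lra).
    specialize (K ltac:(lra) ltac:(lra) Hs Ht H1 H2). lra.
Qed.

Lemma subgrad_pt X Y s t sg : ss X Y -> 0 <= s -> 0 <= t -> 0 <= sg ->
  (sg - 1) * ((s*X+t*Y)^MO * (s*X)) <= ((sg*s*X+t*Y)^NE - (s*X+t*Y)^NE) / INR NE.
Proof. intros [[HX HY]|[HX HY]] Hs Ht Hg.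
  - apply (subgrad_nn MO); auto.
  - set (x := -X). set (y := -Y). pose proof (subgrad_nn MO x y s t sg) as K.
    change (S MO) with NE in K. negcase X Y x y.
    replace (sg*s*-x + t * -y) with (-(sg*s*x+t*y)) by ring. replace (s * -x + t * -y) with (-(s*x+t*y)) by ring.
    rewrite !pe, !po. assert (0 <= x) by (unfold x; lra). assert (0 <= y) by (unfold y; lra).
    specialize (K ltac:(lra) ltac:(lra) Hs Ht Hg). lra.
Qed.

Lemma mono_pt X Y s s' t : ss X Y -> 0 <= s <= s' -> 0 <= t ->
  (s*X+t*Y)^NE <= (s'*X+t*Y)^NE.
Proof. intros [[HX HY]|[HX HY]] Hs Ht.
  - apply pow_incr. split; nra.
  - set (x := -X). set (y := -Y). negcase X Y x y.
    replace (s * -x + t * -y) with (-(s*x+t*y)) by ring. replace (s' * -x + t * -y) with (-(s'*x+t*y)) by ring.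
    rewrite !pe. assert (0 <= x) by (unfold x; lra). assert (0 <= y) by (unfold y; lra).
    apply pow_incr. split; nra.
Qed.

Lemma upper_pt X Y s t : ss X Y -> 0 <= s -> 0 <= t ->
  (s*X+t*Y)^NE <= (Rmax s t)^NE * (X+Y)^NE.
Proof. intros [[HX HY]|[HX HY]] Hs Ht.
  - apply (upper_nn MO); auto.
  - set (x := -X). set (y := -Y). negcase X Y x y.
    replace (s * -x + t * -y) with (-(s*x+t*y)) by ring. replace (-x + -y) with (-(x+y)) by ring.
    rewrite !pe. assert (0 <= x) by (unfold x; lra). assert (0 <= y) by (unfold y; lra).
    apply (upper_nn MO); auto.
Qed.

Lemma lip_pt X Y s s' t R : ss X Y -> 0 <= s <= R -> 0 <= s' <= R -> 0 <= t <= R ->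
  Rabs ((s*X+t*Y)^NE - (s'*X+t*Y)^NE) <= INR NE * R^MO * Rabs (s - s') * (X+Y)^NE.
Proof. intros [[HX HY]|[HX HY]] Hs Hs' Ht.
  - apply (lip_nn MO); auto.
  - set (x := -X). set (y := -Y). negcase X Y x y.
    replace (s * -x + t * -y) with (-(s*x+t*y)) by ring. replace (-x + -y) with (-(x+y)) by ring.
    replace (s' * -x + t * -y) with (-(s'*x+t*y)) by ring.
    rewrite !pe. assert (0 <= x) by (unfold x; lra). assert (0 <= y) by (unfold y; lra).
    apply (lip_nn MO); auto.
Qed.

Lemma dpart_pt X Y s t : ss X Y -> 0 <= s -> 0 <= t ->
  0 <= (s*X+t*Y)^MO * (s*X) <= (Rmax s t)^NE * (X+Y)^NE.
Proof. intros HS Hs Ht. pose proof (upper_pt X Y s t HS Hs Ht).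
  destruct HS as [[HX HY]|[HX HY]].
  - assert (0 <= s*X+t*Y) by nra. assert (0 <= (s*X+t*Y)^MO) by (apply pow_le; lra).
    split. apply Rmult_le_pos; nra.
    eapply Rle_trans; [|exact H]. rewrite NE_S. cbn [pow]. assert (s*X <= s*X+t*Y) by nra. nra.
  - set (x := -X) in *. set (y := -Y) in *. negcase X Y x y.
    assert (0 <= x) by (unfold x; lra). assert (0 <= y) by (unfold y; lra).
    replace (s * -x + t * -y) with (-(s*x+t*y)) by ring. rewrite po.
    assert (0 <= s*x+t*y) by nra. assert (0 <= (s*x+t*y)^MO) by (apply pow_le; lra).
    split. replace (- (s * x + t * y) ^ MO * (s * - x)) with ((s * x + t * y) ^ MO * (s * x)) by ring.
    apply Rmult_le_pos; nra.
    replace (-x + -y) with (X+Y) by (unfold x, y; ring).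
    eapply Rle_trans; [|exact H]. replace (s * X + t * Y) with (-(s*x+t*y)) by (unfold x, y; ring).
    rewrite pe, NE_S. cbn [pow]. assert (s*x <= s*x+t*y) by nra. nra.
Qed.
End Signed.

Lemma rpow_pos x a : 0 < x -> rpow x a = Rpower x a.
Proof. intros H. unfold rpow. destruct (Rlt_dec 0 x); [auto|lra]. Qed.
Lemma rpow_0 a : rpow 0 a = 0.
Proof. unfold rpow. destruct (Rlt_dec 0 0); [lra|auto]. Qed.
Lemma rpow_nonneg x a : 0 <= rpow x a.
Proof. unfold rpow. destruct (Rlt_dec 0 x). unfold Rpower. left; apply exp_pos. lra. Qed.
Lemma rpow_gt0 x a : 0 < x -> 0 < rpow x a.
Proof. intros. rewrite rpow_pos by auto. unfold Rpower. apply exp_pos. Qed.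
Lemma rpow_1 a : rpow 1 a = 1.
Proof. rewrite rpow_pos by lra. unfold Rpower. rewrite ln_1. rewrite Rmult_0_r. apply exp_0. Qed.
Lemma rpow_mult s x a : 0 <= s -> 0 <= x -> rpow (s*x) a = rpow s a * rpow x a.
Proof. intros Hs Hx. destruct (Req_dec s 0). subst. rewrite Rmult_0_l, rpow_0; ring.
  destruct (Req_dec x 0). subst. rewrite Rmult_0_r, rpow_0; ring.
  rewrite !rpow_pos by nra. rewrite Rpower_mult_distr; auto; lra. Qed.
Lemma rpow_pow x n : 0 <= x -> (0 < n)%nat -> rpow x (INR n) = x ^ n.
Proof. intros Hx Hn. destruct (Req_dec x 0). subst. rewrite rpow_0. destruct n. lia. simpl; ring.
  rewrite rpow_pos by lra. apply Rpower_pow; lra. Qed.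
Lemma ln_rpow x a : 0 < x -> ln (rpow x a) = a * ln x.
Proof. intros. rewrite rpow_pos by auto. apply ln_Rpower. Qed.
Lemma rpow_le x y a : 0 <= x <= y -> 0 <= a -> rpow x a <= rpow y a.
Proof. intros [H1 H2] Ha. destruct (Req_dec x 0). subst. rewrite rpow_0. apply rpow_nonneg.
  rewrite !rpow_pos by lra. apply Rle_Rpower_l; auto; lra. Qed.
Lemma rpow_inv x p : 0 < p -> 0 <= x -> rpow (rpow x (1/p)) p = x.
Proof. intros Hp Hx. destruct (Req_dec x 0). subst. rewrite !rpow_0; auto.
  rewrite (rpow_pos x) by lra. rewrite rpow_pos by (unfold Rpower; apply exp_pos).
  rewrite Rpower_mult. replace (1/p*p) with 1 by (field; lra). apply Rpower_1; lra. Qed.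

Lemma exp_ge1 x : 1 + x <= exp x.
Proof. destruct (Req_dec x 0). subst. rewrite exp_0; lra. left; apply exp_ineq1; auto. Qed.
Lemma ln_le y : 0 < y -> ln y <= y - 1.
Proof. intros. pose proof (exp_ge1 (ln y)). rewrite exp_ln in H0; auto. lra. Qed.

Lemma exp_conv l a b : 0 <= l <= 1 -> exp (l*a + (1-l)*b) <= l * exp a + (1-l) * exp b.
Proof. intros Hl. set (c := l*a+(1-l)*b).
  assert (exp a = exp c * exp (a - c)) by (rewrite <- exp_plus; f_equal; ring).
  assert (exp b = exp c * exp (b - c)) by (rewrite <- exp_plus; f_equal; ring).
  pose proof (exp_ge1 (a-c)). pose proof (exp_ge1 (b-c)). pose proof (exp_pos c).
  rewrite H, H0.
  assert (exp c * (1 + (a-c)) <= exp c * exp (a-c)) by (apply Rmult_le_compat_l; lra).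
  assert (exp c * (1 + (b-c)) <= exp c * exp (b-c)) by (apply Rmult_le_compat_l; lra).
  assert (l * (exp c * (1 + (a-c))) + (1-l) * (exp c * (1 + (b-c))) = exp c) by (unfold c; ring).
  nra. Qed.

Lemma sc1 s p q n : 0 <= s -> p = INR n -> (0 < n)%nat -> 0 < p -> p < q ->
  (1 - rpow s q) / q <= (1 - s ^ n) / p.
Proof. intros Hs Hpn Hn Hp Hpq. rewrite <- (rpow_pow s n) by auto. rewrite <- Hpn.
  destruct (Req_dec s 0). subst. rewrite !rpow_0. apply Rmult_le_compat_l; [lra|].
  apply Rinv_le_contravar; lra.
  rewrite !rpow_pos by lra. unfold Rpower.
  pose proof (exp_conv (p/q) (q * ln s) 0). rewrite exp_0 in H0.
  replace (p / q * (q * ln s) + (1 - p / q) * 0) with (p * ln s) in H0 by (field; lra).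
  assert (exp (p * ln s) <= p / q * exp (q * ln s) + (1 - p / q) * 1).
  apply H0. split. apply Rmult_le_pos; [lra| left; apply Rinv_0_lt_compat; lra].
  apply (Rmult_le_reg_r q); [lra|]. unfold Rdiv; rewrite Rmult_assoc, Rinv_l; lra.
  apply (Rmult_le_reg_r (p*q)). nra.
  replace ((1 - exp (q * ln s)) / q * (p * q)) with (p - p * exp (q * ln s)) by (field; lra).
  replace ((1 - exp (p * ln s)) / p * (p * q)) with (q - q * exp (p * ln s)) by (field; lra).
  apply (Rmult_le_compat_l q) in H1; [|lra].
  replace (q * (p / q * exp (q * ln s) + (1 - p / q) * 1)) with (p * exp (q * ln s) + q - p) in H1 by (field; lra).
  lra. Qed.

Lemma sc2 s q : 0 <= s -> 0 <= 1 - rpow s q + q * rpow s q * ln s.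
Proof. intros Hs. destruct (Req_dec s 0). subst. rewrite rpow_0. lra.
  assert (0 < rpow s q) by (apply rpow_gt0; lra).
  assert (q * ln s = ln (rpow s q)) by (rewrite ln_rpow; lra).
  replace (q * rpow s q * ln s) with (rpow s q * ln (rpow s q)) by (rewrite <- H1; ring).
  pose proof (ln_le (/ rpow s q) (Rinv_0_lt_compat _ H0)). rewrite ln_Rinv in H2 by auto.
  apply (Rmult_le_compat_l (rpow s q)) in H2; [|lra]. rewrite Rmult_minus_distr_l, Rinv_r in H2 by lra. lra. Qed.

Lemma rp_even j z : rpow (Rabs z) (INR (NE j)) = z ^ (NE j).
Proof. rewrite rpow_pow by (try apply Rabs_pos; unfold NE; lia).
  destruct (Rle_dec 0 z). rewrite Rabs_right by lra; auto.
  rewrite Rabs_left by lra. apply pe. Qed.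

Lemma rp_odd j z : rpow (Rabs z) (INR (NE j) - 2) * z = z ^ (MO j).
Proof. destruct (Req_dec z 0). subst. unfold MO. simpl. ring.
  replace (INR (NE j) - 2) with (INR (2*j)) by (unfold NE; rewrite !S_INR; ring).
  unfold MO. cbn [pow]. rewrite Rmult_comm. f_equal.
  destruct j as [|j']. simpl. rewrite rpow_pos by (apply Rabs_pos_lt; auto). apply Rpower_O. apply Rabs_pos_lt; auto.
  rewrite rpow_pow by (try apply Rabs_pos; lia).
  rewrite pow_mult. rewrite pow_mult. f_equal. rewrite <- !Rsqr_pow2. symmetry. apply Rsqr_abs. Qed.

Lemma cont_of_ex_derive (f : R -> R) x : ex_derive f x -> continuity_pt f x.
Proof. intros H. apply continuity_pt_filterlim. exact (ex_derive_continuous f x H). Qed.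

Lemma cont_eps (f : R -> R) x : (forall eps, 0 < eps -> exists del, 0 < del /\
   forall x', Rabs (x' - x) < del -> Rabs (f x' - f x) < eps) -> continuity_pt f x.
Proof. intros H. unfold continuity_pt, continue_in, limit1_in, limit_in. intros eps Heps.
  destruct (H eps Heps) as [del [Hd Hf]]. exists del. split; auto.
  intros x' [_ Hx']. simpl in *. unfold R_dist in *. apply Hf; auto. Qed.

Definition clamp lo hi x := Rmax lo (Rmin hi x).
Lemma clamp_in lo hi x : lo <= hi -> lo <= clamp lo hi x <= hi.
Proof. intros. unfold clamp, Rmax, Rmin. repeat destruct Rle_dec; lra. Qed.
Lemma clamp_id lo hi x : lo <= x <= hi -> clamp lo hi x = x.
Proof. intros. unfold clamp, Rmax, Rmin. repeat destruct Rle_dec; lra. Qed.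
Lemma clamp_lip lo hi x y : lo <= hi -> Rabs (clamp lo hi x - clamp lo hi y) <= Rabs (x - y).
Proof. intros. unfold clamp, Rmax, Rmin. repeat destruct Rle_dec; split_Rabs; lra. Qed.

Lemma EVT2 (F : R -> R -> R) (lo hi : R) : lo <= hi ->
  (forall s t, lo <= s <= hi -> lo <= t <= hi -> continuity_pt (F s) t) ->
  (forall s, lo <= s <= hi -> forall eps, 0 < eps -> exists del, 0 < del /\
     forall s', lo <= s' <= hi -> Rabs (s' - s) < del -> forall t, lo <= t <= hi -> Rabs (F s' t - F s t) < eps) ->
  exists s0 t0, lo <= s0 <= hi /\ lo <= t0 <= hi /\
    forall s t, lo <= s <= hi -> lo <= t <= hi -> F s t <= F s0 t0.
Proof. intros Hlh Hc He.
  assert (Hm: forall s, exists t, lo <= s <= hi -> lo <= t <= hi /\ forall t', lo <= t' <= hi -> F s t' <= F s t).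
  { intros s. destruct (Rle_dec lo s); [destruct (Rle_dec s hi)|].
    - destruct (continuity_ab_maj (F s) lo hi Hlh) as [M [HM1 HM2]]. intros; apply Hc; lra.
      exists M. intros _. split; auto.
    - exists lo. intros; lra.
    - exists lo. intros; lra. }
  set (tau := fun s => proj1_sig (constructive_indefinite_description _ (Hm s))).
  assert (Htau: forall s, lo <= s <= hi -> lo <= tau s <= hi /\ forall t', lo <= t' <= hi -> F s t' <= F s (tau s)).
  { intros s Hs. unfold tau. destruct (constructive_indefinite_description _ (Hm s)) as [t Ht]. simpl. auto. }
  set (psi := fun x => F (clamp lo hi x) (tau (clamp lo hi x))).
  assert (Hpsi: forall x, continuity_pt psi x).
  { intros x. apply cont_eps. intros eps Heps.
    set (s := clamp lo hi x). assert (Hs: lo <= s <= hi) by (apply clamp_in; auto).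
    destruct (He s Hs eps Heps) as [del [Hd Hdel]]. exists del. split; auto.
    intros x' Hx'. unfold psi. fold s. set (s' := clamp lo hi x').
    assert (Hs': lo <= s' <= hi) by (apply clamp_in; auto).
    assert (Hss: Rabs (s' - s) < del) by (eapply Rle_lt_trans; [apply clamp_lip; auto| auto]).
    destruct (Htau s Hs) as [T1 T2]. destruct (Htau s' Hs') as [T3 T4].
    pose proof (Hdel s' Hs' Hss (tau s) T1). pose proof (Hdel s' Hs' Hss (tau s') T3).
    pose proof (T2 (tau s') T3). pose proof (T4 (tau s) T1).
    split_Rabs; lra. }
  destruct (continuity_ab_maj psi lo hi Hlh) as [s0 [H1 H2]]. intros; apply Hpsi.
  exists s0, (tau s0). destruct (Htau s0 H2) as [T1 T2]. split; auto. split; auto.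
  intros s t Hs Ht. specialize (H1 s Hs). unfold psi in H1. rewrite !clamp_id in H1 by auto.
  destruct (Htau s Hs) as [_ T4]. specialize (T4 t Ht). lra.
Qed.

Lemma cont_pt_eps (f : R -> R) x : continuity_pt f x -> forall eps, 0 < eps -> exists del, 0 < del /\
   forall x', Rabs (x' - x) < del -> Rabs (f x' - f x) < eps.
Proof. intros H eps Heps. unfold continuity_pt, continue_in, limit1_in, limit_in in H.
  destruct (H eps Heps) as [del [Hd Hf]]. exists del. split; auto.
  intros x' Hx'. destruct (Req_dec x' x). subst. rewrite Rminus_diag, Rabs_R0; auto.
  apply (Hf x'). split. split; auto. unfold D_x, no_cond; auto. unfold R_dist; auto. Qed.

Lemma exp_le_mono x y : x <= y -> exp x <= exp y.
Proof. intros. destruct (Req_dec x y). subst; lra. left; apply exp_increasing; lra. Qed.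
Lemma ln_le_mono x y : 0 < x -> x <= y -> ln x <= ln y.
Proof. intros. destruct (Req_dec x y). subst; lra. left; apply ln_increasing; lra. Qed.

Definition ellt q A B x := exp (q * ln x) * (A - B * ln x).
Definition ellr q A B x := rpow x q * (A - B * ln x).

Lemma rpow_exp x q : 0 < x -> rpow x q = exp (q * ln x).
Proof. intros. unfold rpow. destruct (Rlt_dec 0 x); [|lra]. reflexivity. Qed.

Lemma ellr_t q A B x : 0 < x -> ellr q A B x = ellt q A B x.
Proof. intros. unfold ellr, ellt. rewrite rpow_exp; auto. Qed.

Lemma ellr_0 q A B : ellr q A B 0 = 0.
Proof. unfold ellr, rpow. destruct (Rlt_dec 0 0); [lra|ring]. Qed.

Lemma exp_ge1' x : 1 + x <= exp x.
Proof. destruct (Req_dec x 0). subst. rewrite exp_0; lra. left; apply exp_ineq1; auto. Qed.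

Lemma ell_mono q A B : 0 < q -> 0 < B -> exists del, 0 < del <= 1 /\
  forall x x', 0 <= x -> x <= x' -> x' <= del -> ellr q A B x <= ellr q A B x'.
Proof. intros Hq HB. set (del := exp (- (Rabs A + B/q) / B)).
  assert (Hd0: 0 < del) by apply exp_pos.
  assert (Hl: ln del = - (Rabs A + B/q) / B) by (apply ln_exp).
  assert (HBq: 0 < B/q) by (apply Rdiv_lt_0_compat; auto).
  assert (Hln0: ln del <= 0). { rewrite Hl. pose proof (Rabs_pos A).
    assert (0 <= (Rabs A + B/q) / B) by (apply Rdiv_le_0_compat; lra).
    unfold Rdiv in *. lra. }
  exists del. split. split; auto. rewrite <- (exp_ln 1) by lra. rewrite ln_1.
  rewrite <- (exp_ln del) by auto. apply exp_le_mono. lra.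
  intros x x' Hx Hxx Hx'.
  assert (Key: forall y', y' <= ln del -> B/q <= A - B * y').
  { intros. rewrite Hl in H. assert (B * y' <= - (Rabs A + B/q)).
    { apply (Rmult_le_compat_l B) in H; [|lra]. replace (B * (- (Rabs A + B / q) / B)) with (- (Rabs A + B/q)) in H by (field; lra). auto. }
    pose proof (Rle_abs (-A)). rewrite Rabs_Ropp in H1. lra. }
  destruct (Req_dec x 0).
  - subst. rewrite ellr_0. destruct (Req_dec x' 0). subst; rewrite ellr_0; lra.
    rewrite ellr_t by lra. unfold ellt. apply Rmult_le_pos. left; apply exp_pos.
    assert (ln x' <= ln del). { destruct (Req_dec x' del). subst; lra. left; apply ln_increasing; lra. }
    specialize (Key _ H0). lra.
  - rewrite !ellr_t by lra. unfold ellt.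
    assert (ln x' <= ln del). { destruct (Req_dec x' del). subst; lra. left; apply ln_increasing; lra. }
    assert (ln x <= ln x'). { destruct (Req_dec x x'). subst; lra. left; apply ln_increasing; lra. }
    set (y := ln x) in *. set (y' := ln x') in *. set (d := y' - y).
    specialize (Key _ H0).
    assert (E: exp (q * y') = exp (q * y) * exp (q * d)) by (rewrite <- exp_plus; f_equal; unfold d; ring).
    rewrite E. pose proof (exp_ge1' (q*d)). pose proof (exp_pos (q*y)).
    assert (0 <= d) by (unfold d; lra).
    assert (0 <= (exp (q*d) - 1 - q*d) * (A - B * y')) by (apply Rmult_le_pos; nra).
    assert (0 <= d * (q * (A - B * y') - B)).
    { apply Rmult_le_pos; auto. apply (Rmult_le_compat_l q) in Key; [|lra].
      replace (q * (B/q)) with B in Key by (field; lra). lra. }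
    assert (0 <= exp (q*y) * ((exp (q*d) - 1 - q*d) * (A - B * y') + d * (q * (A - B * y') - B))) by
      (apply Rmult_le_pos; lra).
    assert (Eq: exp(q*y)*exp(q*d)*(A-B*y') - exp(q*y)*(A-B*y) = exp(q*y)*((exp(q*d)-1-q*d)*(A-B*y') + d*(q*(A-B*y') - B))) by (unfold d; ring).
    lra.
Qed.

Lemma ell_bound q A B : 1 <= q -> 0 < B -> exists Bd, forall x, 0 <= x -> ellr q A B x <= Bd.
Proof. intros Hq HB. exists (Rabs A + B + exp (q * (Rabs A / B)) * Rabs A).
  pose proof (Rabs_pos A). pose proof (exp_pos (q * (Rabs A / B))).
  assert (0 <= exp (q * (Rabs A / B)) * Rabs A) by (apply Rmult_le_pos; lra).
  intros x Hx. destruct (Req_dec x 0). subst. rewrite ellr_0. lra.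
  rewrite ellr_t by lra. unfold ellt. set (y := ln x).
  pose proof (exp_pos (q*y)). pose proof (Rle_abs A). pose proof (Rle_abs (-A)). rewrite Rabs_Ropp in H5.
  destruct (Rle_dec y 0).
  - assert (exp (q*y) <= 1) by (rewrite <- exp_0; apply exp_le_mono; nra).
    assert (exp (q*y) <= exp y) by (apply exp_le_mono; nra).
    pose proof (exp_ge1' (-y)). assert (exp y * exp (-y) = 1) by (rewrite <- exp_plus; replace (y + -y) with 0 by ring; apply exp_0).
    pose proof (exp_pos y).
    assert (exp (q*y) * (-y) <= 1) by nra.
    assert (exp (q*y) * A <= Rabs A) by nra.
    assert (exp (q * y) * (A - B * y) = exp (q*y) * A + B * (exp (q*y) * (-y))) by ring. nra.
  - destruct (Rle_dec (A - B*y) 0).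
    + assert (exp (q * y) * (A - B * y) <= 0) by nra. lra.
    + assert (y <= Rabs A / B). { apply (Rmult_le_reg_l B); auto. replace (B * (Rabs A / B)) with (Rabs A) by (field; lra). lra. }
      assert (exp (q*y) <= exp (q * (Rabs A / B))) by (apply exp_le_mono; nra).
      assert (A - B*y <= Rabs A) by nra. nra.
Qed.

Lemma ell_large q A B C n : 0 < q -> 0 < B -> 0 <= C -> INR n <= q -> forall K,
  exists R, 1 <= R /\ forall x, R <= x -> C * x^n + ellr q A B x <= -K.
Proof. intros Hq HB HC Hn K. set (Rr := exp ((C + Rabs A + Rabs K + 1)/B)).
  pose proof (Rabs_pos A). pose proof (Rabs_pos K).
  assert (Hy0: 0 <= (C + Rabs A + Rabs K + 1)/B) by (apply Rdiv_le_0_compat; lra).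
  assert (HR1: 1 <= Rr) by (unfold Rr; apply Rle_trans with (exp 0); [rewrite exp_0; lra| apply exp_le_mono; auto]).
  exists Rr. split. auto.
  intros x Hx.
  rewrite ellr_t by lra. unfold ellt. set (y := ln x).
  assert (Hy: (C + Rabs A + Rabs K + 1)/B <= y). { unfold y. rewrite <- (ln_exp ((C + Rabs A + Rabs K + 1)/B)).
    apply ln_le_mono; auto. apply exp_pos. }
  assert (HBy: C + Rabs A + Rabs K + 1 <= B * y). { apply (Rmult_le_compat_l B) in Hy; [|lra].
    replace (B * ((C + Rabs A + Rabs K + 1) / B)) with (C + Rabs A + Rabs K + 1) in Hy by (field; lra). auto. }
  assert (0 <= y) by lra.
  assert (x^n <= exp (q*y)). { rewrite <- Rpower_pow by lra. unfold Rpower. apply exp_le_mono. fold y. apply Rmult_le_compat_r; auto. }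
  clearbody y.
  assert (1 <= exp (q*y)) by (rewrite <- exp_0; apply exp_le_mono; apply Rmult_le_pos; lra).
  pose proof (Rle_abs A). pose proof (Rle_abs (-K)). rewrite Rabs_Ropp in H5.
  assert (C + A - B * y <= - (Rabs K + 1)) by lra.
  assert (exp (q*y) * (C + A - B*y) <= exp (q*y) * (- (Rabs K + 1))) by (apply Rmult_le_compat_l; lra).
  assert (1 * (Rabs K + 1) <= exp (q*y) * (Rabs K + 1)) by (apply Rmult_le_compat_r; lra).
  assert (C * x^n <= C * exp (q*y)) by (apply Rmult_le_compat_l; auto).
  assert (exp (q * y) * (A - B * y) = exp (q*y) * (C + A - B*y) - C * exp (q*y)) by ring.
  assert (exp (q*y) * (- (Rabs K + 1)) = - (exp (q*y) * (Rabs K + 1))) by ring.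
  pose proof (Rle_abs K). lra.
Qed.

Lemma ellt_cont q A B x : 0 < x -> continuity_pt (ellt q A B) x.
Proof. intros. apply cont_of_ex_derive. unfold ellt. auto_derive. lra. Qed.

Lemma ellt_deriv q A B s0 : 0 < s0 ->
  derivable_pt_lim (fun sg => ellt q A B (sg*s0)) 1 (exp (q * ln s0) * (q*A - B - q*B*ln s0)).
Proof. intros. apply is_derive_Reals. unfold ellt. auto_derive. nra.
  rewrite !Rmult_1_l. field. lra. Qed.

Definition Lpt (q r cn z : R) := if Req_EM_T z 0 then 0 else cn * rpow (Rabs z) q * ln (rpow (Rabs z) r).
Definition Dpt (q r cn z v : R) := if Req_EM_T z 0 then 0 else cn * rpow (Rabs z) (q-2) * z * v * ln (rpow (Rabs z) r).

Lemma Lpt_scal q r cn s z : 0 <= s ->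
  Lpt q r cn (s*z) = rpow s q * Lpt q r cn z + r * rpow s q * ln s * (cn * rpow (Rabs z) q).
Proof. intros Hs. unfold Lpt. destruct (Req_EM_T z 0).
  - subst. rewrite Rmult_0_r. destruct (Req_EM_T 0 0); [|congruence]. rewrite Rabs_R0, rpow_0. ring.
  - destruct (Req_dec s 0).
    + subst. rewrite Rmult_0_l. destruct (Req_EM_T 0 0); [|congruence]. rewrite rpow_0. ring.
    + destruct (Req_EM_T (s*z) 0). exfalso. apply Rmult_integral in e; destruct e; lra.
      rewrite Rabs_mult, (Rabs_right s) by lra. rewrite !rpow_mult by (try apply Rabs_pos; lra).
      assert (0 < Rabs z) by (apply Rabs_pos_lt; auto).
      rewrite !ln_mult by (apply rpow_gt0; lra). rewrite !ln_rpow by lra. ring. Qed.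

Lemma Dpt_self q r cn z : Dpt q r cn z z = Lpt q r cn z.
Proof. unfold Dpt, Lpt. destruct (Req_EM_T z 0); auto.
  assert (0 < Rabs z) by (apply Rabs_pos_lt; auto).
  assert (rpow (Rabs z) (q-2) * z * z = rpow (Rabs z) q).
  { rewrite !rpow_pos by auto. assert (Eq: q = (q-2) + INR 2) by (simpl; lra).
    rewrite Eq at 2. rewrite Rpower_plus, Rpower_pow by auto. rewrite Rmult_assoc. f_equal.
    rewrite <- Rsqr_pow2, <- Rsqr_abs. unfold Rsqr. ring. }
  rewrite <- H0. ring. Qed.

Lemma Dpt_0 q r cn z : Dpt q r cn z 0 = 0.
Proof. unfold Dpt. destruct (Req_EM_T z 0); auto. ring. Qed.

Lemma Lpt_0 q r cn : Lpt q r cn 0 = 0.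
Proof. unfold Lpt. destruct (Req_EM_T 0 0); [auto|congruence]. Qed.

Lemma rpow_abs_scal s z q : 0 <= s -> rpow (Rabs (s*z)) q = rpow s q * rpow (Rabs z) q.
Proof. intros. rewrite Rabs_mult, (Rabs_right s) by lra. apply rpow_mult; auto. apply Rabs_pos. Qed.

Definition ell (q r S L x : R) := r/(q^2) * rpow x q * S - 1/q * (rpow x q * L + r * rpow x q * ln x * S).

Section Main.
Variables (q r : R) (a b c : Z -> R) (j : nat) (b0 : R).
Notation p := (INR (NE j)).
Hypotheses (Hp1 : 1 < p) (Hpq : p < q) (Hr : 1 <= r) (Ha : forall n, 0 < a n) (Hb : forall n, 0 < b n)
  (Hc : forall n, 0 < c n) (Hb0 : 0 < b0) (Hbb : forall n, b0 <= b n) (HC : summableZ c).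

Notation Ifn := (Ifun p q r a b c).
Notation dIf := (dI p q r a b c).
Notation inDf := (inD p q r a b c).
Notation Et := (Eterm p a b).
Notation Lt := (Lterm q r c).

Lemma Lterm_pt v n : Lt v n = Lpt q r (c n) (v n).
Proof. reflexivity. Qed.

Lemma Et_pt v n : Et v n = a n * (Delta v n)^(NE j) + b n * (v n)^(NE j).
Proof. unfold Eterm. rewrite !rp_even. auto. Qed.

Lemma Et_nonneg v n : 0 <= Et v n.
Proof. rewrite Et_pt. pose proof (pe_nonneg j (Delta v n)). pose proof (pe_nonneg j (v n)).
  pose proof (Ha n). pose proof (Hb n). nra. Qed.

Lemma dI_eq v z : dIf v z = sumZ (fun n => a n * ((Delta v n)^(MO j) * Delta z n) + b n * ((v n)^(MO j) * z n))
   - sumZ (fun n => Dpt q r (c n) (v n) (z n)).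
Proof. unfold dI. f_equal. apply sumZ_ext. intros n. rewrite <- !rp_odd. ring. Qed.

Lemma Ifun_eq v : inDf v -> Ifn v = 1/p * sumZ (Et v) + r/(q^2) * sumZ (fun n => c n * rpow (Rabs (v n)) q)
   - 1/q * sumZ (Lt v).
Proof. intros [HE _]. unfold Ifun, normE. rewrite rpow_inv. auto. lra.
  apply sumZ_nonneg; auto. apply Et_nonneg. Qed.

Lemma ubound v : inDf v -> exists M, 0 < M /\ forall n, Rabs (v n) <= M.
Proof. intros [HE _]. exists (Rmax 1 (sumZ (Et v) / b0)). split.
  apply Rlt_le_trans with 1; [lra| apply Rmax_l]. intros n.
  destruct (Rle_dec (Rabs (v n)) 1). eapply Rle_trans; [exact r0| apply Rmax_l].
  eapply Rle_trans; [|apply Rmax_r].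
  pose proof (sumZ_ge_term _ n (Et_nonneg v) HE). rewrite Et_pt in H.
  pose proof (pe_nonneg j (Delta v n)). pose proof (Ha n).
  assert (b n * (v n)^(NE j) <= sumZ (Et v)) by nra.
  assert (Rabs (v n) <= (v n)^(NE j)).
  { rewrite <- rp_even, rpow_pow by (try apply Rabs_pos; unfold NE; lia).
    rewrite <- (pow_1 (Rabs (v n))) at 1. apply Rle_pow; [lra| unfold NE; lia]. }
  pose proof (Hbb n). pose proof (pe_nonneg j (v n)).
  apply (Rmult_le_reg_r b0); auto. unfold Rdiv. rewrite Rmult_assoc, Rinv_l by lra. nra. Qed.

Lemma sCv v : inDf v -> summableZ (fun n => c n * rpow (Rabs (v n)) q).
Proof. intros Hv. destruct (ubound v Hv) as [M [HM HB]].
  apply (sZ_cmp (fun n => rpow M q * c n)). 2: apply sZ_scal; auto.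
  intros n. rewrite Rabs_right. rewrite (Rmult_comm (rpow M q)). apply Rmult_le_compat_l. left; auto.
  apply rpow_le. split; [apply Rabs_pos| auto]. lra.
  apply Rle_ge, Rmult_le_pos; [left; auto| apply rpow_nonneg]. Qed.

Section U.
Variable u : seqZ.
Hypothesis HuD : inDf u.

Definition U := upos u.
Definition V := uneg u.
Definition X n := Delta U n.
Definition Y n := Delta V n.
Definition w s t := addZ (scalZ s U) (scalZ t V).
Definition NI s t n := a n * (s * X n + t * Y n)^(NE j) + b n * (s * U n + t * V n)^(NE j).
Definition E1I s t n := a n * ((s * X n + t * Y n)^(MO j) * (s * X n)) + b n * ((s * U n + t * V n)^(MO j) * (s * U n)).
Definition E2I s t n := a n * ((s * X n + t * Y n)^(MO j) * (t * Y n)) + b n * ((s * U n + t * V n)^(MO j) * (t * V n)).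
Definition CU n := c n * rpow (Rabs (U n)) q.
Definition CV n := c n * rpow (Rabs (V n)) q.
Definition LU := Lt U.
Definition LV := Lt V.
Definition S1 := sumZ CU.
Definition S2 := sumZ CV.
Definition L1 := sumZ LU.
Definition L2 := sumZ LV.
Definition Nsum s t := sumZ (NI s t).
Definition E1 s t := sumZ (E1I s t).
Definition E2 s t := sumZ (E2I s t).

Lemma UV_cases n : (U n = u n /\ V n = 0 /\ 0 <= u n) \/ (U n = 0 /\ V n = u n /\ u n < 0).
Proof. unfold U, V, upos, uneg. destruct (Rle_dec 0 (u n)).
  left. rewrite Rmax_left, Rmin_right by lra. auto.
  right. rewrite Rmax_right, Rmin_left by lra. split; auto. split; auto. lra. Qed.

Lemma ssUV n : ss (U n) (V n).
Proof. unfold ss. destruct (UV_cases n) as [[H1 [H2 H3]]|[H1 [H2 H3]]]; rewrite H1, H2; lra. Qed.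

Lemma ssXY n : ss (X n) (Y n).
Proof. unfold ss, X, Y, Delta. destruct (UV_cases n) as [[H1 [H2 H3]]|[H1 [H2 H3]]];
  destruct (UV_cases (n+1)%Z) as [[H4 [H5 H6]]|[H4 [H5 H6]]]; rewrite H1, H2, H4, H5;
  destruct (Rle_dec 0 (u (n + 1)%Z - u n)); lra. Qed.

Lemma UVsum n : U n + V n = u n.
Proof. destruct (UV_cases n) as [[H1 [H2 H3]]|[H1 [H2 H3]]]; rewrite H1, H2; ring. Qed.

Lemma XYsum n : X n + Y n = Delta u n.
Proof. unfold X, Y, Delta. rewrite <- (UVsum n), <- (UVsum (n+1)%Z). ring. Qed.

Lemma w_pt s t n : w s t n = s * U n + t * V n.
Proof. reflexivity. Qed.

Lemma Dw_pt s t n : Delta (w s t) n = s * X n + t * Y n.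
Proof. unfold X, Y, w, addZ, scalZ, Delta. ring. Qed.

Lemma upos_w s t : 0 <= s -> 0 <= t -> upos (w s t) = scalZ s U.
Proof. intros. apply functional_extensionality. intros n. unfold upos at 1. rewrite w_pt. unfold scalZ.
  destruct (UV_cases n) as [[H1 [H2 H3]]|[H1 [H2 H3]]]; rewrite H1, H2.
  rewrite Rmax_left; nra. rewrite Rmax_right; nra. Qed.

Lemma uneg_w s t : 0 <= s -> 0 <= t -> uneg (w s t) = scalZ t V.
Proof. intros. apply functional_extensionality. intros n. unfold uneg at 1. rewrite w_pt. unfold scalZ.
  destruct (UV_cases n) as [[H1 [H2 H3]]|[H1 [H2 H3]]]; rewrite H1, H2.
  rewrite Rmin_right; nra. rewrite Rmin_left; nra. Qed.

Lemma w11 : w 1 1 = u.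
Proof. apply functional_extensionality. intros n. rewrite w_pt, <- UVsum. ring. Qed.

Lemma wtt t : w t t = scalZ t u.
Proof. apply functional_extensionality. intros n. rewrite w_pt. unfold scalZ. rewrite <- UVsum. ring. Qed.

Lemma NI11 n : NI 1 1 n = Et u n.
Proof. unfold NI. rewrite Et_pt, !Rmult_1_l, XYsum, UVsum. auto. Qed.

Lemma sEu : summableZ (Et u). Proof. destruct HuD; auto. Qed.
Lemma sLu : summableZ (Lt u). Proof. destruct HuD; auto. Qed.

Lemma NI_bd s t n : 0 <= s -> 0 <= t -> 0 <= NI s t n <= (Rmax s t)^(NE j) * Et u n.
Proof. intros. rewrite <- NI11. unfold NI. rewrite !Rmult_1_l.
  pose proof (upper_pt j _ _ s t (ssXY n) H H0). pose proof (upper_pt j _ _ s t (ssUV n) H H0).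
  pose proof (pe_nonneg j (s * X n + t * Y n)). pose proof (pe_nonneg j (s * U n + t * V n)).
  pose proof (Ha n). pose proof (Hb n). split. nra. nra. Qed.

Lemma sNI s t : 0 <= s -> 0 <= t -> summableZ (NI s t).
Proof. intros. apply (sZ_cmp (fun n => (Rmax s t)^(NE j) * Et u n)).
  intros n. destruct (NI_bd s t n H H0). rewrite Rabs_right; lra.
  apply sZ_scal, sEu. Qed.

Lemma E1I_bd s t n : 0 <= s -> 0 <= t -> 0 <= E1I s t n <= (Rmax s t)^(NE j) * Et u n.
Proof. intros. rewrite <- NI11. unfold NI, E1I. rewrite !Rmult_1_l.
  pose proof (dpart_pt j _ _ s t (ssXY n) H H0). pose proof (dpart_pt j _ _ s t (ssUV n) H H0).
  pose proof (Ha n). pose proof (Hb n). split. nra. nra. Qed.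

Lemma E2I_bd s t n : 0 <= s -> 0 <= t -> 0 <= E2I s t n <= (Rmax s t)^(NE j) * Et u n.
Proof. intros. rewrite <- NI11. unfold NI, E2I. rewrite !Rmult_1_l.
  pose proof (dpart_pt j _ _ t s (ssXY n) H0 H) as A1. pose proof (dpart_pt j _ _ t s (ssUV n) H0 H) as A2.
  pose proof (ssXY n) as S1'. pose proof (ssUV n) as S2'.
  assert (ss (Y n) (X n)) by (unfold ss in *; tauto). assert (ss (V n) (U n)) by (unfold ss in *; tauto).
  pose proof (dpart_pt j _ _ t s H1 H0 H) as B1. pose proof (dpart_pt j _ _ t s H2 H0 H) as B2.
  rewrite Rmax_comm in B1, B2. rewrite (Rplus_comm (t * Y n)), (Rplus_comm (Y n)) in B1.
  rewrite (Rplus_comm (t * V n)), (Rplus_comm (V n)) in B2.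
  pose proof (Ha n). pose proof (Hb n). split. nra. nra. Qed.

Lemma sE1I s t : 0 <= s -> 0 <= t -> summableZ (E1I s t).
Proof. intros. apply (sZ_cmp (fun n => (Rmax s t)^(NE j) * Et u n)).
  intros n. destruct (E1I_bd s t n H H0). rewrite Rabs_right; lra.
  apply sZ_scal, sEu. Qed.
Lemma sE2I s t : 0 <= s -> 0 <= t -> summableZ (E2I s t).
Proof. intros. apply (sZ_cmp (fun n => (Rmax s t)^(NE j) * Et u n)).
  intros n. destruct (E2I_bd s t n H H0). rewrite Rabs_right; lra.
  apply sZ_scal, sEu. Qed.

Lemma sCU : summableZ CU.
Proof. apply (sZ_cmp (fun n => c n * rpow (Rabs (u n)) q)); [|apply sCv; auto].
  intros n. unfold CU. pose proof (Hc n). pose proof (rpow_nonneg (Rabs (U n)) q).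
  rewrite Rabs_right by nra. destruct (UV_cases n) as [[H1 [H2 H3]]|[H1 [H2 H3]]]; rewrite H1.
  lra. rewrite Rabs_R0, rpow_0. pose proof (rpow_nonneg (Rabs (u n)) q). nra. Qed.
Lemma sCV : summableZ CV.
Proof. apply (sZ_cmp (fun n => c n * rpow (Rabs (u n)) q)); [|apply sCv; auto].
  intros n. unfold CV. pose proof (Hc n). pose proof (rpow_nonneg (Rabs (V n)) q).
  rewrite Rabs_right by nra. destruct (UV_cases n) as [[H1 [H2 H3]]|[H1 [H2 H3]]]; rewrite H2.
  rewrite Rabs_R0, rpow_0. pose proof (rpow_nonneg (Rabs (u n)) q). nra. lra. Qed.
Lemma sLU : summableZ LU.
Proof. apply (sZ_cmp (fun n => Rabs (Lt u n))); [|apply sZ_abs, sLu].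
  intros n. unfold LU. rewrite !Lterm_pt. destruct (UV_cases n) as [[H1 [H2 H3]]|[H1 [H2 H3]]]; rewrite H1.
  lra. rewrite Lpt_0, Rabs_R0. apply Rabs_pos. Qed.
Lemma sLV : summableZ LV.
Proof. apply (sZ_cmp (fun n => Rabs (Lt u n))); [|apply sZ_abs, sLu].
  intros n. unfold LV. rewrite !Lterm_pt. destruct (UV_cases n) as [[H1 [H2 H3]]|[H1 [H2 H3]]]; rewrite H2.
  rewrite Lpt_0, Rabs_R0. apply Rabs_pos. lra. Qed.

Lemma Lw_pt s t n : 0 <= s -> 0 <= t ->
  Lt (w s t) n = rpow s q * LU n + r * rpow s q * ln s * CU n + (rpow t q * LV n + r * rpow t q * ln t * CV n).
Proof. intros. unfold LU, LV, CU, CV. rewrite !Lterm_pt, w_pt.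
  destruct (UV_cases n) as [[H1 [H2 H3]]|[H1 [H2 H3]]]; rewrite H1, H2.
  - rewrite Rmult_0_r, Rplus_0_r, Lpt_scal, Lpt_0, Rabs_R0, rpow_0 by auto. ring.
  - rewrite Rmult_0_r, Rplus_0_l, Lpt_scal, Lpt_0, Rabs_R0, rpow_0 by auto. ring. Qed.

Lemma Cw_pt s t n : 0 <= s -> 0 <= t ->
  c n * rpow (Rabs (w s t n)) q = rpow s q * CU n + rpow t q * CV n.
Proof. intros. unfold CU, CV. rewrite w_pt.
  destruct (UV_cases n) as [[H1 [H2 H3]]|[H1 [H2 H3]]]; rewrite H1, H2.
  - rewrite Rmult_0_r, Rplus_0_r, rpow_abs_scal, Rabs_R0, rpow_0 by auto. ring.
  - rewrite Rmult_0_r, Rplus_0_l, rpow_abs_scal, Rabs_R0, rpow_0 by auto. ring. Qed.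

Lemma Ew_pt s t n : Et (w s t) n = NI s t n.
Proof. rewrite Et_pt. unfold NI. rewrite Dw_pt, w_pt. auto. Qed.

Lemma sLw s t : 0 <= s -> 0 <= t -> summableZ (Lt (w s t)).
Proof. intros. eapply sZ_ext. intros n; symmetry; apply Lw_pt; auto.
  pose proof sLU. pose proof sLV. pose proof sCU. pose proof sCV.
  apply sZ_plus; apply sZ_plus; try (apply sZ_scal; auto). Qed.

Lemma inD_w s t : 0 <= s -> 0 <= t -> inDf (w s t).
Proof. intros. split. unfold inE. eapply sZ_ext. intros n; symmetry; apply Ew_pt. apply sNI; auto.
  apply sLw; auto. Qed.

Lemma sumL_w s t : 0 <= s -> 0 <= t ->
  sumZ (Lt (w s t)) = rpow s q * L1 + r * rpow s q * ln s * S1 + (rpow t q * L2 + r * rpow t q * ln t * S2).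
Proof. intros. rewrite (sumZ_ext _ _ (fun n => Lw_pt s t n H H0)).
  pose proof sLU. pose proof sLV. pose proof sCU. pose proof sCV.
  rewrite sumZ_plus; try (apply sZ_plus; apply sZ_scal; auto).
  rewrite !sumZ_plus; try (apply sZ_scal; auto). rewrite !sumZ_scal. unfold L1, L2, S1, S2. auto. Qed.

Lemma sumC_w s t : 0 <= s -> 0 <= t ->
  sumZ (fun n => c n * rpow (Rabs (w s t n)) q) = rpow s q * S1 + rpow t q * S2.
Proof. intros. rewrite (sumZ_ext _ _ (fun n => Cw_pt s t n H H0)).
  rewrite sumZ_plus. rewrite !sumZ_scal. auto. apply sZ_scal, sCU. apply sZ_scal, sCV. Qed.

Lemma I_w s t : 0 <= s -> 0 <= t -> Ifn (w s t) = 1/p * Nsum s t + ell q r S1 L1 s + ell q r S2 L2 t.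
Proof. intros. rewrite Ifun_eq by (apply inD_w; auto). rewrite sumL_w, sumC_w by auto.
  rewrite (sumZ_ext _ _ (Ew_pt s t)). unfold Nsum, ell. ring. Qed.

Lemma dA1_pt s t n : 0 <= s -> 0 <= t ->
  a n * ((Delta (w s t) n)^(MO j) * Delta (upos (w s t)) n) + b n * ((w s t n)^(MO j) * upos (w s t) n) = E1I s t n.
Proof. intros. rewrite upos_w by auto. rewrite Dw_pt, w_pt. unfold E1I, scalZ, X, Delta. f_equal. f_equal. f_equal. ring. Qed.

Lemma dA2_pt s t n : 0 <= s -> 0 <= t ->
  a n * ((Delta (w s t) n)^(MO j) * Delta (uneg (w s t)) n) + b n * ((w s t n)^(MO j) * uneg (w s t) n) = E2I s t n.
Proof. intros. rewrite uneg_w by auto. rewrite Dw_pt, w_pt. unfold E2I, scalZ, Y, Delta. f_equal. f_equal. f_equal. ring. Qed.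

Lemma dB1_pt s t n : 0 <= s -> 0 <= t ->
  Dpt q r (c n) (w s t n) (upos (w s t) n) = rpow s q * LU n + r * rpow s q * ln s * CU n.
Proof. intros. rewrite upos_w by auto. rewrite w_pt. unfold scalZ, LU, CU. rewrite Lterm_pt.
  destruct (UV_cases n) as [[H1 [H2 H3]]|[H1 [H2 H3]]]; rewrite H1, H2.
  - rewrite Rmult_0_r, Rplus_0_r, Dpt_self, Lpt_scal by auto. ring.
  - rewrite !Rmult_0_r, Dpt_0, Lpt_0, Rabs_R0, rpow_0. ring. Qed.

Lemma dB2_pt s t n : 0 <= s -> 0 <= t ->
  Dpt q r (c n) (w s t n) (uneg (w s t) n) = rpow t q * LV n + r * rpow t q * ln t * CV n.
Proof. intros. rewrite uneg_w by auto. rewrite w_pt. unfold scalZ, LV, CV. rewrite Lterm_pt.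
  destruct (UV_cases n) as [[H1 [H2 H3]]|[H1 [H2 H3]]]; rewrite H1, H2.
  - rewrite !Rmult_0_r, Dpt_0, Lpt_0, Rabs_R0, rpow_0. ring.
  - rewrite Rmult_0_r, Rplus_0_l, Dpt_self, Lpt_scal by auto. ring. Qed.

Lemma dI1_w s t : 0 <= s -> 0 <= t ->
  dIf (w s t) (upos (w s t)) = E1 s t - (rpow s q * L1 + r * rpow s q * ln s * S1).
Proof. intros. rewrite dI_eq. rewrite (sumZ_ext _ _ (fun n => dA1_pt s t n H H0)).
  rewrite (sumZ_ext _ _ (fun n => dB1_pt s t n H H0)).
  rewrite sumZ_plus; try (apply sZ_scal; [apply sLU|apply sCU]).
  rewrite !sumZ_scal. unfold E1, L1, S1. f_equal.
  apply sZ_scal, sLU. apply sZ_scal, sCU.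
Qed.

Lemma dI2_w s t : 0 <= s -> 0 <= t ->
  dIf (w s t) (uneg (w s t)) = E2 s t - (rpow t q * L2 + r * rpow t q * ln t * S2).
Proof. intros. rewrite dI_eq. rewrite (sumZ_ext _ _ (fun n => dA2_pt s t n H H0)).
  rewrite (sumZ_ext _ _ (fun n => dB2_pt s t n H H0)).
  rewrite sumZ_plus; try (apply sZ_scal; [apply sLV|apply sCV]).
  rewrite !sumZ_scal. unfold E2, L2, S2. f_equal.
  apply sZ_scal, sLV. apply sZ_scal, sCV.
Qed.

Lemma pw x : x^(MO j) * x = x^(NE j).
Proof. rewrite (NE_S j). cbn [pow]. ring. Qed.

Lemma sumZ_lin4 k1 k2 k3 k4 f1 f2 f3 f4 : summableZ f1 -> summableZ f2 -> summableZ f3 -> summableZ f4 ->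
  sumZ (fun n => k1 * f1 n + k2 * f2 n + k3 * f3 n + k4 * f4 n) = k1 * sumZ f1 + k2 * sumZ f2 + k3 * sumZ f3 + k4 * sumZ f4.
Proof. intros. rewrite !sumZ_plus; try (repeat apply sZ_plus; apply sZ_scal; auto).
  rewrite !sumZ_scal; auto. all: try (apply sZ_scal; auto). Qed.

Lemma dI_uu : dIf u u = E1 1 1 + E2 1 1 - (L1 + L2).
Proof. rewrite dI_eq.
  rewrite (sumZ_ext _ (fun n => E1I 1 1 n + E2I 1 1 n)).
  rewrite (sumZ_ext (fun n => Dpt q r (c n) (u n) (u n)) (fun n => LU n + LV n)).
  rewrite !sumZ_plus. unfold E1, E2, L1, L2. ring.
  apply sLU. apply sLV. apply sE1I; lra. apply sE2I; lra.
  - intros n. rewrite Dpt_self. unfold LU, LV. rewrite !Lterm_pt.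
    destruct (UV_cases n) as [[H1 [H2 H3]]|[H1 [H2 H3]]]; rewrite H1, H2, Lpt_0; ring.
  - intros n. unfold E1I, E2I. rewrite !Rmult_1_l. rewrite <- XYsum, <- UVsum. unfold X, Y. ring.
Qed.

Lemma dI1_u : dIf u (upos u) = E1 1 1 - L1.
Proof. pose proof (dI1_w 1 1 ltac:(lra) ltac:(lra)). rewrite w11 in H. rewrite H, rpow_1, ln_1. ring. Qed.
Lemma dI2_u : dIf u (uneg u) = E2 1 1 - L2.
Proof. pose proof (dI2_w 1 1 ltac:(lra) ltac:(lra)). rewrite w11 in H. rewrite H, rpow_1, ln_1. ring. Qed.

Lemma dI_split : dIf u u = dIf u (upos u) + dIf u (uneg u).
Proof. rewrite dI_uu, dI1_u, dI2_u. ring. Qed.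

Lemma S1_nonneg : 0 <= S1.
Proof. apply sumZ_nonneg; [|apply sCU]. intros n. unfold CU. pose proof (Hc n). pose proof (rpow_nonneg (Rabs (U n)) q). nra. Qed.
Lemma S2_nonneg : 0 <= S2.
Proof. apply sumZ_nonneg; [|apply sCV]. intros n. unfold CV. pose proof (Hc n). pose proof (rpow_nonneg (Rabs (V n)) q). nra. Qed.

Lemma ell_key S L s : 0 <= S -> 0 <= s -> 0 <= ell q r S L 1 - ell q r S L s + (1 - rpow s q)/q * L.
Proof. intros. unfold ell. rewrite rpow_1, ln_1. pose proof (sc2 s q H0).
  assert (0 < q) by lra.
  replace (r / q ^ 2 * 1 * S - 1 / q * (1 * L + r * 1 * 0 * S) -
     (r / q ^ 2 * rpow s q * S - 1 / q * (rpow s q * L + r * rpow s q * ln s * S)) + (1 - rpow s q) / q * L)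
    with (r * S / q^2 * (1 - rpow s q + q * rpow s q * ln s)) by (field; lra).
  apply Rmult_le_pos; auto. apply Rmult_le_pos. nra. left. apply Rinv_0_lt_compat. nra. Qed.

Lemma Kineq s t : 0 <= s -> 0 <= t ->
  Ifn (w s t) <= Ifn u - (1 - rpow s q)/q * dIf u (upos u) - (1 - rpow t q)/q * dIf u (uneg u).
Proof. intros Hs Ht. rewrite I_w by auto. pose proof (I_w 1 1 ltac:(lra) ltac:(lra)) as Iu.
  rewrite w11 in Iu. rewrite Iu.
  rewrite dI1_u, dI2_u.
  set (Ks := (1 - rpow s q)/q). set (Kt := (1 - rpow t q)/q).
  assert (HKs: Ks <= (1 - s^(NE j)) / p) by (apply sc1; auto; try lra; unfold NE; lia).
  assert (HKt: Kt <= (1 - t^(NE j)) / p) by (apply sc1; auto; try lra; unfold NE; lia).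
  assert (A: 0 <= sumZ (fun n => (1/p) * NI 1 1 n + (-(1/p)) * NI s t n + (-Ks) * E1I 1 1 n + (-Kt) * E2I 1 1 n)).
  { apply sumZ_nonneg.
    - intros n. unfold NI, E1I, E2I. rewrite !Rmult_1_l.
      pose proof (key_pt j _ _ s t Ks Kt (ssXY n) Hs Ht HKs HKt).
      pose proof (key_pt j _ _ s t Ks Kt (ssUV n) Hs Ht HKs HKt).
      pose proof (Ha n). pose proof (Hb n).
      assert (0 <= a n * (((X n + Y n) ^ NE j - (s * X n + t * Y n) ^ NE j) / p - Ks * ((X n + Y n) ^ MO j * X n) - Kt * ((X n + Y n) ^ MO j * Y n))) by (apply Rmult_le_pos; lra).
      assert (0 <= b n * (((U n + V n) ^ NE j - (s * U n + t * V n) ^ NE j) / p - Ks * ((U n + V n) ^ MO j * U n) - Kt * ((U n + V n) ^ MO j * V n))) by (apply Rmult_le_pos; lra).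
      unfold Rdiv in *. lra.
    - repeat apply sZ_plus; apply sZ_scal. apply sNI; lra. apply sNI; lra. apply sE1I; lra. apply sE2I; lra. }
  rewrite sumZ_lin4 in A by (try apply sNI; try apply sE1I; try apply sE2I; lra).
  pose proof (ell_key S1 L1 s S1_nonneg Hs). pose proof (ell_key S2 L2 t S2_nonneg Ht).
  fold Ks in H. fold Kt in H0. unfold Nsum, E1, E2. lra.
Qed.

Lemma dI_scal t : 0 <= t -> dIf (scalZ t u) (scalZ t u) =
  t^(NE j) * sumZ (Et u) - (rpow t q * sumZ (Lt u) + r * rpow t q * ln t * sumZ (fun n => c n * rpow (Rabs (u n)) q)).
Proof. intros Ht. rewrite dI_eq.
  rewrite (sumZ_ext _ (fun n => t^(NE j) * Et u n)).
  rewrite (sumZ_ext (fun n => Dpt q r (c n) (scalZ t u n) (scalZ t u n))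
     (fun n => rpow t q * Lt u n + (r * rpow t q * ln t) * (c n * rpow (Rabs (u n)) q))).
  rewrite sumZ_plus, !sumZ_scal. ring. apply sZ_scal, sLu. apply sZ_scal, sCv; auto.
  - intros n. rewrite Dpt_self. unfold scalZ. rewrite Lpt_scal by auto. rewrite Lterm_pt. ring.
  - intros n. rewrite Et_pt. unfold scalZ, Delta. rewrite <- !Rmult_minus_distr_l.
    rewrite !pw, !Rpow_mult_distr. ring.
Qed.

End U.

Notation inNf := (inN p q r a b c).
Notation inMf := (inM p q r a b c).

Lemma inN_max v : inNf v -> forall sg, 0 <= sg -> Ifn (scalZ sg v) <= Ifn v.
Proof. intros [HD [_ Hd]] sg Hsg. pose proof (Kineq v HD sg sg Hsg Hsg). rewrite wtt in H.
  pose proof (dI_split v HD). rewrite Hd in H0.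
  assert (dIf v (uneg v) = - dIf v (upos v)) by lra. rewrite H1 in H. lra. Qed.

Lemma inM_max v : inMf v -> forall s t, 0 <= s -> 0 <= t -> Ifn (w v s t) <= Ifn v.
Proof. intros [HD [_ [_ [H1 H2]]]] s t Hs Ht. pose proof (Kineq v HD s t Hs Ht).
  rewrite H1, H2 in H. lra. Qed.

Lemma ss_sym x y : ss x y -> ss y x.
Proof. unfold ss; tauto. Qed.

Lemma mono_t X' Y' s t t' : ss X' Y' -> 0 <= s -> 0 <= t <= t' -> (s*X'+t*Y')^(NE j) <= (s*X'+t'*Y')^(NE j).
Proof. intros. pose proof (mono_pt j Y' X' t t' s (ss_sym _ _ H) H1 H0).
  rewrite (Rplus_comm (s*X')), (Rplus_comm (s*X')). auto. Qed.

Lemma subgrad_t X' Y' s t tg : ss X' Y' -> 0 <= s -> 0 <= t -> 0 <= tg ->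
  (tg - 1) * ((s*X'+t*Y')^(MO j) * (t*Y')) <= ((s*X'+tg*t*Y')^(NE j) - (s*X'+t*Y')^(NE j)) / p.
Proof. intros. pose proof (subgrad_pt j Y' X' t s tg (ss_sym _ _ H) H1 H0 H2).
  rewrite (Rplus_comm (s*X')), (Rplus_comm (s*X')). auto. Qed.

Lemma lip_t X' Y' s t t' Rb : ss X' Y' -> 0 <= t <= Rb -> 0 <= t' <= Rb -> 0 <= s <= Rb ->
  Rabs ((s*X'+t*Y')^(NE j) - (s*X'+t'*Y')^(NE j)) <= INR (NE j) * Rb^(MO j) * Rabs (t - t') * (X'+Y')^(NE j).
Proof. intros. pose proof (lip_pt j Y' X' t t' s Rb (ss_sym _ _ H) H0 H1 H2).
  rewrite (Rplus_comm (s*X')), (Rplus_comm (s*X')), (Rplus_comm X'). auto. Qed.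

Section UN.
Variable u : seqZ.
Hypothesis HuD : inDf u.
Notation Nu := (sumZ (Et u)).

Lemma Nsum11 : Nsum u 1 1 = Nu.
Proof. apply sumZ_ext. apply NI11. Qed.

Lemma N_nonneg s t : 0 <= s -> 0 <= t -> 0 <= Nsum u s t.
Proof. intros. apply sumZ_nonneg. intros n; apply NI_bd; auto. apply sNI; auto. Qed.

Lemma Nu_nonneg : 0 <= Nu.
Proof. apply sumZ_nonneg. apply Et_nonneg. apply sEu; auto. Qed.

Lemma N_mono_s s s' t : 0 <= s <= s' -> 0 <= t -> Nsum u s t <= Nsum u s' t.
Proof. intros. apply sumZ_le; try apply sNI; try lra; auto.
  intros n. unfold NI. pose proof (mono_pt j _ _ s s' t (ssXY u n) H H0).
  pose proof (mono_pt j _ _ s s' t (ssUV u n) H H0). pose proof (Ha n). pose proof (Hb n).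
  apply Rplus_le_compat; apply Rmult_le_compat_l; lra. Qed.

Lemma N_mono_t s t t' : 0 <= s -> 0 <= t <= t' -> Nsum u s t <= Nsum u s t'.
Proof. intros. apply sumZ_le; try apply sNI; try lra; auto.
  intros n. unfold NI. pose proof (mono_t _ _ s t t' (ssXY u n) H H0).
  pose proof (mono_t _ _ s t t' (ssUV u n) H H0). pose proof (Ha n). pose proof (Hb n).
  apply Rplus_le_compat; apply Rmult_le_compat_l; lra. Qed.

Lemma N_upper s t : 0 <= s -> 0 <= t -> Nsum u s t <= (Rmax s t)^(NE j) * Nu.
Proof. intros. rewrite <- sumZ_scal. apply sumZ_le. intros n; apply NI_bd; auto.
  apply sNI; auto. apply sZ_scal, sEu; auto. Qed.

Lemma N_absdiff f g K : summableZ f -> summableZ g -> 0 <= K ->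
  (forall n, Rabs (f n - g n) <= K * Et u n) -> Rabs (sumZ f - sumZ g) <= K * Nu.
Proof. intros Hf Hg HK H. rewrite <- sumZ_minus by auto. rewrite <- sumZ_scal.
  assert (S: summableZ (fun n => K * Et u n)) by (apply sZ_scal, sEu; auto).
  assert (S2: summableZ (fun n => f n - g n)).
  { eapply sZ_ext; [|apply (sZ_plus _ _ Hf (sZ_scal (-1) _ Hg))]. intros; simpl; ring. }
  apply Rabs_le. split.
  - assert (sumZ (fun n => -1 * (K * Et u n)) <= sumZ (fun n => f n - g n)).
    { apply sumZ_le; auto. intros n. specialize (H n). apply Rabs_le_between in H. lra.
      apply (sZ_scal (-1) _ S). }
    rewrite sumZ_scal in H0. lra.
  - apply sumZ_le; auto. intros n. specialize (H n). apply Rabs_le_between in H. lra.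
Qed.

Lemma abs_comb an bn d1 d2 K e1 e2 : 0 <= an -> 0 <= bn -> Rabs d1 <= K*e1 -> Rabs d2 <= K*e2 ->
  Rabs (an*d1 + bn*d2) <= K*(an*e1 + bn*e2).
Proof. intros. eapply Rle_trans. apply Rabs_triang. rewrite !Rabs_mult, (Rabs_right an), (Rabs_right bn) by lra.
  apply Rmult_le_compat_l with (r := an) in H1; auto. apply Rmult_le_compat_l with (r := bn) in H2; auto. lra. Qed.

Lemma Et_XY n : Et u n = a n * (X u n + Y u n)^(NE j) + b n * (U u n + V u n)^(NE j).
Proof. rewrite Et_pt, XYsum, UVsum. auto. Qed.

Lemma N_lip_s s s' t Rb : 0 <= s <= Rb -> 0 <= s' <= Rb -> 0 <= t <= Rb ->
  Rabs (Nsum u s t - Nsum u s' t) <= (INR (NE j) * Rb^(MO j) * Rabs (s - s')) * Nu.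
Proof. intros. apply N_absdiff; try (apply sNI; auto; lra).
  apply Rmult_le_pos; [apply Rmult_le_pos; [apply pos_INR| apply pow_le; lra]| apply Rabs_pos].
  intros n. rewrite Et_XY.
  assert (E: NI u s t n - NI u s' t n = a n * ((s * X u n + t * Y u n) ^ NE j - (s' * X u n + t * Y u n) ^ NE j) + b n * ((s * U u n + t * V u n) ^ NE j - (s' * U u n + t * V u n) ^ NE j)) by (unfold NI; ring).
  rewrite E. apply abs_comb. left; apply Ha. left; apply Hb.
  apply lip_pt; auto. apply ssXY.
  apply lip_pt; auto. apply ssUV. Qed.

Lemma N_lip_t s t t' Rb : 0 <= t <= Rb -> 0 <= t' <= Rb -> 0 <= s <= Rb ->
  Rabs (Nsum u s t - Nsum u s t') <= (INR (NE j) * Rb^(MO j) * Rabs (t - t')) * Nu.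
Proof. intros. apply N_absdiff; try (apply sNI; auto; lra).
  apply Rmult_le_pos; [apply Rmult_le_pos; [apply pos_INR| apply pow_le; lra]| apply Rabs_pos].
  intros n. rewrite Et_XY.
  assert (E: NI u s t n - NI u s t' n = a n * ((s * X u n + t * Y u n) ^ NE j - (s * X u n + t' * Y u n) ^ NE j) + b n * ((s * U u n + t * V u n) ^ NE j - (s * U u n + t' * V u n) ^ NE j)) by (unfold NI; ring).
  rewrite E. apply abs_comb. left; apply Ha. left; apply Hb.
  apply lip_t; auto. apply ssXY.
  apply lip_t; auto. apply ssUV. Qed.

Lemma N_sub_s s t sg : 0 <= s -> 0 <= t -> 0 <= sg ->
  (sg - 1) * E1 u s t <= (Nsum u (sg*s) t - Nsum u s t) / p.
Proof. intros. unfold E1, Nsum. rewrite <- sumZ_scal.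
  assert (HS: 0 <= sg * s) by nra.
  replace ((sumZ (NI u (sg * s) t) - sumZ (NI u s t)) / p) with
    (sumZ (fun n => (1/p) * NI u (sg*s) t n + (-(1/p)) * NI u s t n)).
  apply sumZ_le. intros n. unfold E1I, NI.
  pose proof (subgrad_pt j _ _ s t sg (ssXY u n) H H0 H1). pose proof (subgrad_pt j _ _ s t sg (ssUV u n) H H0 H1).
  pose proof (Ha n). pose proof (Hb n).
  apply Rmult_le_compat_l with (r := a n) in H2; [|lra]. apply Rmult_le_compat_l with (r := b n) in H3; [|lra].
  unfold Rdiv in *. rewrite !Rmult_assoc in *. lra.
  apply sZ_scal, sE1I; auto. apply sZ_plus; apply sZ_scal, sNI; auto.
  rewrite sumZ_plus, !sumZ_scal. field. lra. apply sZ_scal, sNI; auto. apply sZ_scal, sNI; auto. Qed.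

Lemma N_sub_t s t tg : 0 <= s -> 0 <= t -> 0 <= tg ->
  (tg - 1) * E2 u s t <= (Nsum u s (tg*t) - Nsum u s t) / p.
Proof. intros. unfold E2, Nsum. rewrite <- sumZ_scal.
  assert (HS: 0 <= tg * t) by nra.
  replace ((sumZ (NI u s (tg * t)) - sumZ (NI u s t)) / p) with
    (sumZ (fun n => (1/p) * NI u s (tg*t) n + (-(1/p)) * NI u s t n)).
  apply sumZ_le. intros n. unfold E2I, NI.
  pose proof (subgrad_t _ _ s t tg (ssXY u n) H H0 H1). pose proof (subgrad_t _ _ s t tg (ssUV u n) H H0 H1).
  pose proof (Ha n). pose proof (Hb n).
  apply Rmult_le_compat_l with (r := a n) in H2; [|lra]. apply Rmult_le_compat_l with (r := b n) in H3; [|lra].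
  unfold Rdiv in *. rewrite !Rmult_assoc in *. lra.
  apply sZ_scal, sE2I; auto. apply sZ_plus; apply sZ_scal, sNI; auto.
  rewrite sumZ_plus, !sumZ_scal. field. lra. apply sZ_scal, sNI; auto. apply sZ_scal, sNI; auto. Qed.

End UN.

Lemma exists_nz v : v <> zeroZ -> exists n, v n <> 0.
Proof. intros H. apply NNPP. intros H1. apply H. apply functional_extensionality. intros n. unfold zeroZ.
  apply NNPP. intros H2. apply H1. exists n. auto. Qed.

Lemma powNE_pos z : z <> 0 -> 0 < z^(NE j).
Proof. intros. rewrite <- rp_even. apply rpow_gt0. apply Rabs_pos_lt; auto. Qed.

Lemma ex1 u : inDf u -> u <> zeroZ -> exists t0, 0 < t0 /\ inNf (scalZ t0 u).
Proof. intros HD Hne. destruct (exists_nz u Hne) as [n0 Hn0].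
  set (Nu := sumZ (Et u)). set (S := sumZ (fun n => c n * rpow (Rabs (u n)) q)). set (L := sumZ (Lt u)).
  assert (HNu: 0 < Nu).
  { pose proof (sumZ_ge_term _ n0 (Et_nonneg u) (sEu u HD)). rewrite Et_pt in H.
    pose proof (powNE_pos _ Hn0). pose proof (pe_nonneg j (Delta u n0)). pose proof (Ha n0). pose proof (Hb n0).
    fold Nu in H. nra. }
  assert (HS: 0 < S).
  { assert (Hnn: forall n, 0 <= c n * rpow (Rabs (u n)) q).
    { intros n. apply Rmult_le_pos. left; apply Hc. apply rpow_nonneg. }
    pose proof (sumZ_ge_term _ n0 Hnn (sCv u HD)). fold S in H.
    assert (0 < c n0 * rpow (Rabs (u n0)) q). { apply Rmult_lt_0_compat. apply Hc. apply rpow_gt0, Rabs_pos_lt; auto. }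
    lra. }
  assert (HrS: 0 < r * S) by nra.
  set (f := fun t => exp (q * ln t) * (L + r * ln t * S) - t^(NE j) * Nu).
  set (e := exp (- Rabs L / (r * S))). set (T := exp ((Rabs L + Nu + 1) / (r*S))).
  assert (He: 0 < e) by apply exp_pos. assert (HT: 0 < T) by apply exp_pos.
  assert (He1: e <= 1). { unfold e. rewrite <- exp_0. apply exp_le_mono.
    pose proof (Rabs_pos L). assert (0 <= Rabs L / (r*S)) by (apply Rdiv_le_0_compat; lra). unfold Rdiv in *. lra. }
  assert (HT1: 1 < T). { unfold T. pose proof (exp_ge1' ((Rabs L + Nu + 1) / (r*S))).
    pose proof (Rabs_pos L). assert (0 < (Rabs L + Nu + 1) / (r*S)) by (apply Rdiv_lt_0_compat; lra). lra. }
  assert (fe: f e < 0).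
  { unfold f. unfold e at 2. rewrite ln_exp.
    replace (L + r * (- Rabs L / (r * S)) * S) with (L - Rabs L) by (field; lra).
    pose proof (Rle_abs L). pose proof (exp_pos (q * ln e)).
    assert (exp (q * ln e) * (L - Rabs L) <= 0) by (apply Rmult_le_0_l; lra).
    assert (0 < e^(NE j) * Nu) by (apply Rmult_lt_0_compat; auto; apply pow_lt; auto). lra. }
  assert (fT: 0 < f T).
  { unfold f. unfold T at 2. rewrite ln_exp.
    replace (L + r * ((Rabs L + Nu + 1) / (r * S)) * S) with (L + Rabs L + Nu + 1) by (field; lra).
    pose proof (Rle_abs (-L)). rewrite Rabs_Ropp in H.
    assert (HlT: 0 <= ln T) by (rewrite <- ln_1; apply ln_le_mono; lra).
    assert (T^(NE j) <= exp (q * ln T)). { rewrite <- Rpower_pow by lra. unfold Rpower. apply exp_le_mono.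
      apply Rmult_le_compat_r; lra. }
    assert (0 < T^(NE j)) by (apply pow_lt; lra).
    assert (T^(NE j) * (Nu + 1) <= exp (q * ln T) * (L + Rabs L + Nu + 1)) by (apply Rmult_le_compat; lra).
    lra. }
  destruct (Ranalysis5.IVT_interv f e T) as [z [Hz Hfz]]; auto.
  { intros x Hx. apply cont_of_ex_derive. unfold f. auto_derive. lra. }
  lra.
  exists z. split. lra. split. rewrite <- wtt. apply inD_w; auto; lra.
  split. intros H. apply (f_equal (fun g => g n0)) in H. unfold scalZ, zeroZ in H.
  apply Rmult_integral in H. destruct H; lra.
  rewrite dI_scal by (auto; lra). rewrite rpow_exp by lra. fold Nu S L.
  unfold f in Hfz.
  assert (E: exp (q * ln z) * L + r * exp (q * ln z) * ln z * S = exp (q * ln z) * (L + r * ln z * S)) by ring.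
  lra.
Qed.

Lemma conj1 u : inDf u -> u <> zeroZ -> exists t0, 0 <= t0 /\
  forall t, 0 <= t -> Ifn (scalZ t u) <= Ifn (scalZ t0 u).
Proof. intros HD Hne. destruct (ex1 u HD Hne) as [t0 [Ht0 HN]]. exists t0. split. lra.
  intros t Ht. replace (scalZ t u) with (scalZ (t/t0) (scalZ t0 u)).
  apply inN_max; auto. apply Rdiv_le_0_compat; lra.
  apply functional_extensionality; intros n. unfold scalZ. field. lra. Qed.

Lemma ell_form S L x : ell q r S L x = ellr q (r/q^2*S - L/q) (r*S/q) x.
Proof. unfold ell, ellr. field. lra. Qed.

Lemma cont_plus2 (f g : R -> R) x : continuity_pt f x -> continuity_pt g x -> continuity_pt (fun y => f y + g y) x.
Proof. intros. exact (continuity_pt_plus f g x H H0). Qed.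

Lemma scal_nz s v : 0 < s -> v <> zeroZ -> scalZ s v <> zeroZ.
Proof. intros Hs Hv H. apply Hv. apply functional_extensionality. intros n.
  apply (f_equal (fun g => g n)) in H. unfold scalZ, zeroZ in *. apply Rmult_integral in H. destruct H; lra. Qed.

Section U2.
Variable u : seqZ.
Hypothesis HuD : inDf u.
Hypothesis HU : upos u <> zeroZ.
Hypothesis HV : uneg u <> zeroZ.

Lemma S1_pos : 0 < S1 u.
Proof. destruct (exists_nz _ HU) as [n0 Hn0].
  assert (Hnn: forall n, 0 <= CU u n). { intros n. apply Rmult_le_pos. left; apply Hc. apply rpow_nonneg. }
  pose proof (sumZ_ge_term _ n0 Hnn (sCU u HuD)).
  assert (0 < CU u n0). { apply Rmult_lt_0_compat. apply Hc. apply rpow_gt0, Rabs_pos_lt; auto. }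
  unfold S1. lra. Qed.
Lemma S2_pos : 0 < S2 u.
Proof. destruct (exists_nz _ HV) as [n0 Hn0].
  assert (Hnn: forall n, 0 <= CV u n). { intros n. apply Rmult_le_pos. left; apply Hc. apply rpow_nonneg. }
  pose proof (sumZ_ge_term _ n0 Hnn (sCV u HuD)).
  assert (0 < CV u n0). { apply Rmult_lt_0_compat. apply Hc. apply rpow_gt0, Rabs_pos_lt; auto. }
  unfold S2. lra. Qed.

Definition A1 := r/q^2 * S1 u - L1 u / q.
Definition B1 := r * S1 u / q.
Definition A2 := r/q^2 * S2 u - L2 u / q.
Definition B2 := r * S2 u / q.
Definition Phi s t := 1/p * Nsum u s t + ellr q A1 B1 s + ellr q A2 B2 t.
Definition Phit s t := 1/p * Nsum u s t + ellt q A1 B1 s + ellt q A2 B2 t.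

Lemma B1_pos : 0 < B1. Proof. unfold B1. pose proof S1_pos. apply Rdiv_lt_0_compat; nra. Qed.
Lemma B2_pos : 0 < B2. Proof. unfold B2. pose proof S2_pos. apply Rdiv_lt_0_compat; nra. Qed.

Lemma I_Phi s t : 0 <= s -> 0 <= t -> Ifn (w u s t) = Phi s t.
Proof. intros. rewrite I_w by auto. unfold Phi, A1, B1, A2, B2. rewrite !ell_form. auto. Qed.

Lemma Phi_t s t : 0 < s -> 0 < t -> Phi s t = Phit s t.
Proof. intros. unfold Phi, Phit. rewrite !ellr_t by auto. auto. Qed.

Lemma crit_lemma (g : R -> R) l : derivable_pt_lim g 1 l -> (forall x, 0 < x -> x < 2 -> g x <= g 1) -> l = 0.
Proof. intros Hd Hm. pose proof (deriv_maximum g 0 2 1 (exist _ l Hd) ltac:(lra) ltac:(lra) Hm). simpl in H. auto. Qed.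

Lemma Phi_large : exists Rb, 1 <= Rb /\ forall s t, 0 <= s -> 0 <= t -> (Rb <= s \/ Rb <= t) -> Phi s t <= 0.
Proof. pose proof B1_pos. pose proof B2_pos.
  destruct (ell_bound q A1 B1 ltac:(lra) H) as [Bd1 HBd1].
  destruct (ell_bound q A2 B2 ltac:(lra) H0) as [Bd2 HBd2].
  pose proof (Nu_nonneg u HuD) as HNu.
  assert (HC0: 0 <= sumZ (Et u) / p) by (apply Rdiv_le_0_compat; lra).
  destruct (ell_large q A1 B1 (sumZ (Et u) / p) (NE j) ltac:(lra) H HC0 ltac:(lra) (Rabs Bd2 + 1)) as [R1 [HR1 HR1']].
  destruct (ell_large q A2 B2 (sumZ (Et u) / p) (NE j) ltac:(lra) H0 HC0 ltac:(lra) (Rabs Bd1 + 1)) as [R2 [HR2 HR2']].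
  exists (Rmax R1 R2). split. eapply Rle_trans; [exact HR1| apply Rmax_l].
  intros s t Hs Ht Hst. unfold Phi.
  pose proof (N_upper u HuD s t Hs Ht).
  assert (1/p * Nsum u s t <= sumZ (Et u) / p * (Rmax s t)^(NE j)).
  { apply (Rmult_le_compat_l (1/p)) in H1; [|apply Rdiv_le_0_compat; lra]. unfold Rdiv in *. lra. }
  pose proof (Rle_abs Bd1). pose proof (Rle_abs Bd2). pose proof (Rmax_l R1 R2). pose proof (Rmax_r R1 R2).
  destruct (Rle_dec t s).
  - rewrite Rmax_left in H2 by auto.
    assert (R1 <= s) by (destruct Hst; lra).
    specialize (HR1' s H7). specialize (HBd2 t Ht). lra.
  - rewrite Rmax_right in H2 by lra.
    assert (R2 <= t) by (destruct Hst; lra).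
    specialize (HR2' t H7). specialize (HBd1 s Hs). lra.
Qed.

Lemma Phi_small : exists d, 0 < d <= 1 /\ (forall s t, 0 <= s <= d -> 0 <= t -> Phi s t <= Phi d t) /\
  (forall s t, 0 <= s -> 0 <= t <= d -> Phi s t <= Phi s d) /\ 0 <= Phi d d.
Proof. pose proof B1_pos. pose proof B2_pos.
  destruct (ell_mono q A1 B1 ltac:(lra) H) as [d1 [Hd1 Hm1]].
  destruct (ell_mono q A2 B2 ltac:(lra) H0) as [d2 [Hd2 Hm2]].
  exists (Rmin d1 d2). pose proof (Rmin_l d1 d2). pose proof (Rmin_r d1 d2).
  assert (0 < Rmin d1 d2) by (apply Rmin_glb_lt; lra).
  split. lra. split; [|split].
  - intros s t Hs Ht. unfold Phi. pose proof (N_mono_s u HuD s (Rmin d1 d2) t Hs Ht).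
    pose proof (Hm1 s (Rmin d1 d2) ltac:(lra) ltac:(lra) ltac:(lra)).
    apply (Rmult_le_compat_l (1/p)) in H4; [|apply Rdiv_le_0_compat; lra]. lra.
  - intros s t Hs Ht. unfold Phi. pose proof (N_mono_t u HuD s t (Rmin d1 d2) Hs Ht).
    pose proof (Hm2 t (Rmin d1 d2) ltac:(lra) ltac:(lra) ltac:(lra)).
    apply (Rmult_le_compat_l (1/p)) in H4; [|apply Rdiv_le_0_compat; lra]. lra.
  - unfold Phi. pose proof (N_nonneg u HuD (Rmin d1 d2) (Rmin d1 d2) ltac:(lra) ltac:(lra)).
    pose proof (Hm1 0 (Rmin d1 d2) ltac:(lra) ltac:(lra) ltac:(lra)).
    pose proof (Hm2 0 (Rmin d1 d2) ltac:(lra) ltac:(lra) ltac:(lra)). rewrite ellr_0 in H5, H6.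
    assert (0 <= 1/p * Nsum u (Rmin d1 d2) (Rmin d1 d2)) by (apply Rmult_le_pos; [apply Rdiv_le_0_compat|]; lra).
    lra.
Qed.

Lemma small_lip K eps : 0 <= K -> 0 < eps -> exists del, 0 < del /\ forall h, Rabs h < del -> K * Rabs h < eps.
Proof. intros. exists (eps / (K+1)). split. apply Rdiv_lt_0_compat; lra.
  intros h Hh. pose proof (Rabs_pos h).
  assert (K * Rabs h <= (K+1) * Rabs h) by nra.
  assert (HH: (K+1) * Rabs h < (K+1) * (eps / (K+1))) by (apply Rmult_lt_compat_l; lra).
  replace ((K+1) * (eps / (K+1))) with eps in HH by (field; lra). lra. Qed.

Lemma Phit_cont_t d Rb : 0 < d -> d <= Rb -> forall s t, d <= s <= Rb -> d <= t <= Rb -> continuity_pt (Phit s) t.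
Proof. intros Hd HdR s t Hs Ht. unfold Phit.
  change (continuity_pt (fun y => (1/p * Nsum u s y + ellt q A1 B1 s) + ellt q A2 B2 y) t).
  apply cont_plus2; [|apply ellt_cont; lra].
  apply cont_eps. intros eps Heps.
  pose proof (Nu_nonneg u HuD).
  set (K := INR (NE j) * (Rb+1)^(MO j) * sumZ (Et u) / p).
  assert (HK: 0 <= K). { unfold K. apply Rdiv_le_0_compat; [|lra]. apply Rmult_le_pos; auto.
    apply Rmult_le_pos. apply pos_INR. apply pow_le; lra. }
  destruct (small_lip K eps HK Heps) as [del [Hdel Hl]].
  exists (Rmin (Rmin d 1) del). split. apply Rmin_glb_lt; [apply Rmin_glb_lt|]; lra.
  intros t' Ht'. pose proof (Rmin_l (Rmin d 1) del). pose proof (Rmin_r (Rmin d 1) del).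
  pose proof (Rmin_l d 1). pose proof (Rmin_r d 1).
  assert (Ht'': 0 <= t' <= Rb + 1) by (split_Rabs; lra).
  pose proof (N_lip_t u HuD s t' t (Rb+1) Ht'' ltac:(lra) ltac:(lra)) as HN.
  replace (1 / p * Nsum u s t' + ellt q A1 B1 s - (1 / p * Nsum u s t + ellt q A1 B1 s)) with
    (1/p * (Nsum u s t' - Nsum u s t)) by ring.
  rewrite Rabs_mult, (Rabs_right (1/p)) by (apply Rle_ge, Rdiv_le_0_compat; lra).
  assert (1/p * Rabs (Nsum u s t' - Nsum u s t) <= K * Rabs (t' - t)).
  { apply (Rmult_le_compat_l (1/p)) in HN; [|apply Rdiv_le_0_compat; lra].
    eapply Rle_trans; [exact HN|]. right. unfold K. field. lra. }
  specialize (Hl (t' - t) ltac:(lra)). lra.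
Qed.

Lemma Phit_equi d Rb : 0 < d -> d <= Rb -> forall s, d <= s <= Rb -> forall eps, 0 < eps -> exists del, 0 < del /\
  forall s', d <= s' <= Rb -> Rabs (s' - s) < del -> forall t, d <= t <= Rb -> Rabs (Phit s' t - Phit s t) < eps.
Proof. intros Hd HdR s Hs eps Heps.
  destruct (cont_pt_eps _ s (ellt_cont q A1 B1 s ltac:(lra)) (eps/2) ltac:(lra)) as [del1 [Hd1 Hl1]].
  pose proof (Nu_nonneg u HuD).
  set (K := INR (NE j) * Rb^(MO j) * sumZ (Et u) / p).
  assert (HK: 0 <= K). { unfold K. apply Rdiv_le_0_compat; [|lra]. apply Rmult_le_pos; auto.
    apply Rmult_le_pos. apply pos_INR. apply pow_le; lra. }
  destruct (small_lip K (eps/2) HK ltac:(lra)) as [del2 [Hd2 Hl2]].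
  exists (Rmin del1 del2). split. apply Rmin_glb_lt; lra.
  intros s' Hs' Hss t Ht. pose proof (Rmin_l del1 del2). pose proof (Rmin_r del1 del2).
  specialize (Hl1 s' ltac:(lra)). specialize (Hl2 (s' - s) ltac:(lra)).
  pose proof (N_lip_s u HuD s' s t Rb ltac:(lra) ltac:(lra) ltac:(lra)) as HN.
  assert (1/p * Rabs (Nsum u s' t - Nsum u s t) <= K * Rabs (s' - s)).
  { apply (Rmult_le_compat_l (1/p)) in HN; [|apply Rdiv_le_0_compat; lra].
    eapply Rle_trans; [exact HN|]. right. unfold K. field. lra. }
  unfold Phit.
  replace (1 / p * Nsum u s' t + ellt q A1 B1 s' + ellt q A2 B2 t - (1 / p * Nsum u s t + ellt q A1 B1 s + ellt q A2 B2 t))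
    with (1/p * (Nsum u s' t - Nsum u s t) + (ellt q A1 B1 s' - ellt q A1 B1 s)) by ring.
  eapply Rle_lt_trans. apply Rabs_triang.
  rewrite Rabs_mult, (Rabs_right (1/p)) by (apply Rle_ge, Rdiv_le_0_compat; lra). lra.
Qed.

Lemma Phi_gmax : exists s0 t0, 0 < s0 /\ 0 < t0 /\ forall s t, 0 <= s -> 0 <= t -> Phi s t <= Phi s0 t0.
Proof. destruct Phi_large as [Rb [HRb HL]]. destruct Phi_small as [d [Hd [Hs1 [Ht1 Hdd]]]].
  destruct (EVT2 Phit d Rb ltac:(lra) (Phit_cont_t d Rb ltac:(lra) ltac:(lra)) (Phit_equi d Rb ltac:(lra) ltac:(lra)))
    as [s0 [t0 [Hs0 [Ht0 HM]]]].
  exists s0, t0. split. lra. split. lra.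
  assert (HM': forall s t, d <= s <= Rb -> d <= t <= Rb -> Phi s t <= Phi s0 t0).
  { intros. rewrite !Phi_t by lra. auto. }
  intros s t Hs Ht.
  destruct (Rle_dec Rb s). { pose proof (HL s t Hs Ht (or_introl r0)). pose proof (HM' d d ltac:(lra) ltac:(lra)). lra. }
  destruct (Rle_dec Rb t). { pose proof (HL s t Hs Ht (or_intror r0)). pose proof (HM' d d ltac:(lra) ltac:(lra)). lra. }
  assert (E1': Phi s t <= Phi (Rmax d s) t).
  { destruct (Rle_dec s d). rewrite Rmax_left by lra. apply Hs1; lra. rewrite Rmax_right by lra. lra. }
  assert (E2': Phi (Rmax d s) t <= Phi (Rmax d s) (Rmax d t)).
  { pose proof (Rmax_l d s). destruct (Rle_dec t d). rewrite (Rmax_left d t) by lra. apply Ht1; lra. rewrite (Rmax_right d t) by lra. lra. }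
  pose proof (HM' (Rmax d s) (Rmax d t)). pose proof (Rmax_l d s). pose proof (Rmax_l d t).
  assert (Rmax d s <= Rb) by (apply Rmax_lub; lra). assert (Rmax d t <= Rb) by (apply Rmax_lub; lra).
  specialize (H ltac:(lra) ltac:(lra)). lra.
Qed.

Lemma crit_s s0 t0 : 0 < s0 -> 0 < t0 -> (forall s t, 0 <= s -> 0 <= t -> Phi s t <= Phi s0 t0) ->
  E1 u s0 t0 - (rpow s0 q * L1 u + r * rpow s0 q * ln s0 * S1 u) = 0.
Proof. intros Hs0 Ht0 HM. set (E := E1 u s0 t0).
  set (g := fun sg => (sg - 1) * E + ellt q A1 B1 (sg * s0) - ellt q A1 B1 s0).
  assert (Hder: derivable_pt_lim g 1 (E + exp (q * ln s0) * (q*A1 - B1 - q*B1*ln s0))).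
  { apply is_derive_Reals. unfold g, ellt. auto_derive. nra. rewrite !Rmult_1_l. field. lra. }
  pose proof (crit_lemma g _ Hder) as Hc0.
  assert (E + exp (q * ln s0) * (q * A1 - B1 - q * B1 * ln s0) = 0).
  { apply Hc0. intros x Hx0 Hx2. unfold g. rewrite Rmult_1_l.
    pose proof (N_sub_s u HuD s0 t0 x ltac:(lra) ltac:(lra) ltac:(lra)). fold E in H.
    pose proof (HM (x*s0) t0 ltac:(nra) ltac:(lra)). unfold Phi in H0.
    rewrite !ellr_t in H0 by nra.
    assert ((Nsum u (x * s0) t0 - Nsum u s0 t0) / p = 1/p * Nsum u (x * s0) t0 - 1/p * Nsum u s0 t0) by (field; lra).
    lra. }
  rewrite rpow_exp by lra. unfold A1, B1 in H. fold E.
  replace (E - (exp (q * ln s0) * L1 u + r * exp (q * ln s0) * ln s0 * S1 u)) with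
    (E + exp (q * ln s0) * (q * (r / q ^ 2 * S1 u - L1 u / q) - r * S1 u / q - q * (r * S1 u / q) * ln s0)) by (field; lra).
  auto.
Qed.

Lemma crit_t s0 t0 : 0 < s0 -> 0 < t0 -> (forall s t, 0 <= s -> 0 <= t -> Phi s t <= Phi s0 t0) ->
  E2 u s0 t0 - (rpow t0 q * L2 u + r * rpow t0 q * ln t0 * S2 u) = 0.
Proof. intros Hs0 Ht0 HM. set (E := E2 u s0 t0).
  set (g := fun tg => (tg - 1) * E + ellt q A2 B2 (tg * t0) - ellt q A2 B2 t0).
  assert (Hder: derivable_pt_lim g 1 (E + exp (q * ln t0) * (q*A2 - B2 - q*B2*ln t0))).
  { apply is_derive_Reals. unfold g, ellt. auto_derive. nra. rewrite !Rmult_1_l. field. lra. }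
  pose proof (crit_lemma g _ Hder) as Hc0.
  assert (E + exp (q * ln t0) * (q * A2 - B2 - q * B2 * ln t0) = 0).
  { apply Hc0. intros x Hx0 Hx2. unfold g. rewrite Rmult_1_l.
    pose proof (N_sub_t u HuD s0 t0 x ltac:(lra) ltac:(lra) ltac:(lra)). fold E in H.
    pose proof (HM s0 (x*t0) ltac:(lra) ltac:(nra)). unfold Phi in H0.
    rewrite !ellr_t in H0 by nra.
    assert ((Nsum u s0 (x * t0) - Nsum u s0 t0) / p = 1/p * Nsum u s0 (x * t0) - 1/p * Nsum u s0 t0) by (field; lra).
    lra. }
  rewrite rpow_exp by lra. unfold A2, B2 in H. fold E.
  replace (E - (exp (q * ln t0) * L2 u + r * exp (q * ln t0) * ln t0 * S2 u)) with
    (E + exp (q * ln t0) * (q * (r / q ^ 2 * S2 u - L2 u / q) - r * S2 u / q - q * (r * S2 u / q) * ln t0)) by (field; lra).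
  auto.
Qed.

Lemma ex2 : exists s0 t0, 0 < s0 /\ 0 < t0 /\ inMf (w u s0 t0).
Proof. destruct Phi_gmax as [s0 [t0 [Hs0 [Ht0 HM]]]]. exists s0, t0. split; auto. split; auto.
  split. apply inD_w; auto; lra.
  rewrite upos_w, uneg_w by (auto; lra).
  split. apply scal_nz; auto. split. apply scal_nz; auto.
  rewrite <- (upos_w u s0 t0), <- (uneg_w u s0 t0) by lra.
  rewrite dI1_w, dI2_w by (auto; lra).
  split. apply crit_s; auto. apply crit_t; auto.
Qed.

End U2.

Lemma w_rescale u s0 t0 : 0 < s0 -> 0 < t0 -> forall s t, w u s t = w (w u s0 t0) (s/s0) (t/t0).
Proof. intros. assert (HU0: U (w u s0 t0) = scalZ s0 (U u)) by (apply upos_w; lra).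
  assert (HV0: V (w u s0 t0) = scalZ t0 (V u)) by (apply uneg_w; lra).
  apply functional_extensionality; intros n. rewrite !(w_pt _ _ _ n). rewrite HU0, HV0. unfold scalZ. field. split; lra. Qed.

Lemma conj2 u : inDf u -> upos u <> zeroZ -> uneg u <> zeroZ -> exists s0 t0, 0 <= s0 /\ 0 <= t0 /\
  forall s t, 0 <= s -> 0 <= t -> Ifn (w u s t) <= Ifn (w u s0 t0).
Proof. intros HD HU HV. destruct (ex2 u HD HU HV) as [s0 [t0 [Hs0 [Ht0 HM]]]].
  exists s0, t0. split. lra. split. lra. intros s t Hs Ht.
  rewrite (w_rescale u s0 t0 Hs0 Ht0 s t). apply inM_max; auto; apply Rdiv_le_0_compat; lra. Qed.

Lemma scal1 v : scalZ 1 v = v.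
Proof. apply functional_extensionality; intros n; unfold scalZ; ring. Qed.

Lemma maxRay_N v : inNf v -> maxRay p q r a b c v = Finite (Ifn v).
Proof. intros HN. apply is_lub_Rbar_unique. split.
  - intros y [t [Ht Hy]]. subst. simpl. apply inN_max; auto.
  - intros bnd Hb'. apply Hb'. exists 1. split. lra. rewrite scal1; auto. Qed.

Lemma maxRay_any u : inDf u -> u <> zeroZ -> exists v, inNf v /\ maxRay p q r a b c u = Finite (Ifn v).
Proof. intros HD Hne. destruct (ex1 u HD Hne) as [t0 [Ht0 HN]]. exists (scalZ t0 u). split; auto.
  apply is_lub_Rbar_unique. split.
  - intros y [t [Ht Hy]]. subst. simpl. replace (scalZ t u) with (scalZ (t/t0) (scalZ t0 u)).
    apply inN_max; auto. apply Rdiv_le_0_compat; lra.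
    apply functional_extensionality; intros n. unfold scalZ. field. lra.
  - intros bnd Hb'. apply Hb'. exists t0. split. lra. auto. Qed.

Lemma maxQuad_M v : inMf v -> maxQuad p q r a b c v = Finite (Ifn v).
Proof. intros HM. apply is_lub_Rbar_unique. split.
  - intros y [s [t [Hs [Ht Hy]]]]. subst. simpl. apply (inM_max v HM s t Hs Ht).
  - intros bnd Hb'. apply Hb'. exists 1, 1. split. lra. split. lra.
    change (Ifn v = Ifn (w v 1 1)). rewrite w11. auto. Qed.

Lemma maxQuad_any u : inDf u -> upos u <> zeroZ -> uneg u <> zeroZ ->
  exists v, inMf v /\ maxQuad p q r a b c u = Finite (Ifn v).
Proof. intros HD HU HV. destruct (ex2 u HD HU HV) as [s0 [t0 [Hs0 [Ht0 HM]]]].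
  exists (w u s0 t0). split; auto. apply is_lub_Rbar_unique. split.
  - intros y [s [t [Hs [Ht Hy]]]]. subst. simpl. change (Ifn (w u s t) <= Ifn (w u s0 t0)).
    rewrite (w_rescale u s0 t0 Hs0 Ht0 s t). apply inM_max; auto; apply Rdiv_le_0_compat; lra.
  - intros bnd Hb'. apply Hb'. exists s0, t0. split. lra. split. lra. auto. Qed.

Lemma main_j :
  (forall u, inDf u -> u <> zeroZ ->
     exists t0, 0 <= t0 /\ forall t, 0 <= t -> Ifn (scalZ t u) <= Ifn (scalZ t0 u)) /\
  (forall u, inDf u -> upos u <> zeroZ -> uneg u <> zeroZ ->
     exists s0 t0, 0 <= s0 /\ 0 <= t0 /\
       forall s t, 0 <= s -> 0 <= t ->
         Ifn (addZ (scalZ s (upos u)) (scalZ t (uneg u)))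
         <= Ifn (addZ (scalZ s0 (upos u)) (scalZ t0 (uneg u)))) /\
  Glb_Rbar (fun y => exists u, inNf u /\ y = Ifn u)
  = Glb_Rbar (fun y => exists u, inDf u /\ u <> zeroZ /\ Finite y = maxRay p q r a b c u) /\
  Glb_Rbar (fun y => exists u, inMf u /\ y = Ifn u)
  = Glb_Rbar (fun y => exists u, inDf u /\ upos u <> zeroZ /\ uneg u <> zeroZ /\ Finite y = maxQuad p q r a b c u).
Proof. split; [|split; [|split]].
  - apply conj1.
  - apply conj2.
  - apply Glb_Rbar_eqset. intros y. split.
    + intros [v [HN Hy]]. exists v. destruct HN as [HD [Hne Hd]]. split; auto. split; auto.
      rewrite maxRay_N. subst; auto. split; auto.
    + intros [v [HD [Hne Hy]]]. destruct (maxRay_any v HD Hne) as [v' [HN' Hm]].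
      exists v'. split; auto. rewrite Hm in Hy. inversion Hy. auto.
  - apply Glb_Rbar_eqset. intros y. split.
    + intros [v [HM Hy]]. exists v. pose proof HM as HM'. destruct HM as [HD [HU [HV _]]].
      split; auto. split; auto. split; auto. rewrite maxQuad_M by auto. subst; auto.
    + intros [v [HD [HU [HV Hy]]]]. destruct (maxQuad_any v HD HU HV) as [v' [HM' Hm]].
      exists v'. split; auto. rewrite Hm in Hy. inversion Hy. auto.
Qed.

End Main.

Theorem lemma2p8 (p q r : R) (a b c : Z -> R)
  (Hp : 1 < p) (Hpq : p < q) (Hp2 : exists k : nat, (0 < k)%nat /\ p / 2 = INR k)
  (Hr : 1 <= r)
  (Ha : forall n, 0 < a n) (Hb : forall n, 0 < b n) (Hc : forall n, 0 < c n)
  (* (C1) *)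
  (HC1a : exists b0, 0 < b0 /\ forall n, b0 <= b n)
  (HC1b : forall M, exists N : Z, forall n, (N < Z.abs n)%Z -> M < b n)
  (* (C2) *)
  (HC2a : exists c0, 0 < c0 /\ forall n, c n <= c0)
  (HC2b : summableZ c) :
  (* the maxima are attained *)
  (forall u, inD p q r a b c u -> u <> zeroZ ->
     exists t0, 0 <= t0 /\
       forall t, 0 <= t -> Ifun p q r a b c (scalZ t u) <= Ifun p q r a b c (scalZ t0 u)) /\
  (forall u, inD p q r a b c u -> upos u <> zeroZ -> uneg u <> zeroZ ->
     exists s0 t0, 0 <= s0 /\ 0 <= t0 /\
       forall s t, 0 <= s -> 0 <= t ->
         Ifun p q r a b c (addZ (scalZ s (upos u)) (scalZ t (uneg u)))
         <= Ifun p q r a b c (addZ (scalZ s0 (upos u)) (scalZ t0 (uneg u)))) /\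
  (* c_* *)
  Glb_Rbar (fun y => exists u, inN p q r a b c u /\ y = Ifun p q r a b c u)
  = Glb_Rbar (fun y => exists u, inD p q r a b c u /\ u <> zeroZ /\
                         Finite y = maxRay p q r a b c u) /\
  (* m_* *)
  Glb_Rbar (fun y => exists u, inM p q r a b c u /\ y = Ifun p q r a b c u)
  = Glb_Rbar (fun y => exists u, inD p q r a b c u /\ upos u <> zeroZ /\
                         uneg u <> zeroZ /\ Finite y = maxQuad p q r a b c u).
Proof.
  destruct Hp2 as [k [Hk Hpk]]. destruct HC1a as [b0 [Hb0 Hbb]].
  assert (Hpj : p = INR (NE (pred k))).
  { unfold NE. replace (S (S (2 * pred k))) with (2 * k)%nat by lia. rewrite mult_INR. simpl. lra. }
  subst p. eapply main_j; eauto.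
Qed.
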